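(* The satisfiability problem for $\exists^*\forall^*\mathsf{SL}(\mathsf{LIA})_{\mathsf{Int},\mathsf{Int}}$ is undecidable: there is no algorithm which, given a sentence $\exists x_1\ldots\exists x_m\forall y_1\ldots\forall y_n ~.~\varphi$ with $\varphi$ a quantifier-free $\mathsf{SL}(\mathsf{LIA})_{\mathsf{Int},\mathsf{Int}}$ formula, decides whether some heap $h$ (together with the standard model of $\mathsf{LIA}$) satisfies it.
   Context: $\mathsf{LIA}$ is linear integer arithmetic: sort $\mathsf{Int}$ interpreted as the integers, with $\geq$, $+$, constants $0,1$ interpreted as usual. $\mathsf{SL}(\mathsf{LIA})_{\mathsf{Int},\mathsf{Int}}$ is separation logic in which both locations and data are of sort $\mathsf{Int}$: formulas are generated by $\varphi ::= \phi \mid \mathsf{emp} \mid t \mapsto u \mid \varphi_1 * \varphi_2 \mid \varphi_1 \mathrel{-\!\!*} \varphi_2 \mid \neg\varphi_1 \mid \varphi_1 \wedge \varphi_2 \mid \exists x ~.~ \varphi_1$, where $\phi$ is a $\mathsf{LIA}$ formula and $t,u$ are $\mathsf{LIA}$ terms; $\forall x.\varphi$ abbreviates $\neg\exists x.\neg\varphi$; there is a designated constant $\mathsf{nil}$ of sort $\mathsf{Int}$. A heap is a finite partial function $h$ from integers to integers. Semantics: $\mathcal{I},h \models \phi$ iff $\mathcal{I} \models \phi$ for $\mathsf{LIA}$ formulas $\phi$; $\mathcal{I},h\models \mathsf{emp}$ iff $h=\emptyset$; $\mathcal{I},h \models t\mapsto u$ iff $h=\{(t^\mathcal{I},u^\mathcal{I})\}$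 and $t^\mathcal{I}\neq \mathsf{nil}^\mathcal{I}$; $\mathcal{I},h\models \varphi_1*\varphi_2$ iff $h = h_1 \uplus h_2$ (disjoint domains) with $\mathcal{I},h_i\models\varphi_i$; $\mathcal{I},h\models \varphi_1\mathrel{-\!\!*}\varphi_2$ iff for every heap $h'$ with domain disjoint from $\mathrm{dom}(h)$ and $\mathcal{I},h'\models\varphi_1$, $\mathcal{I},h'\uplus h\models\varphi_2$; $\mathcal{I},h\models\exists x.\varphi$ iff $\mathcal{I}[x\leftarrow s],h\models\varphi$ for some integer $s$; Boolean connectives are classical. $\exists^*\forall^*\mathsf{SL}(\mathsf{LIA})_{\mathsf{Int},\mathsf{Int}}$ consists of sentences with quantifier prefix $\exists^*\forall^*$ and quantifier-free matrix. *)

(* Defs.v *)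
From Stdlib Require Import ZArith List Arith.
Import ListNotations.
Open Scope Z_scope.

Inductive term : Type :=
| TVar  : nat -> term
| TNil  : term
| TZero : term
| TOne  : term
| TPlus : term -> term -> term.

Inductive form : Type :=
| FGe     : term -> term -> form
| FEmp    : form
| FPto    : term -> term -> form
| FSep    : form -> form -> form
| FWand   : form -> form -> form
| FNot    : form -> form
| FAnd    : form -> form -> form
| FExists : nat -> form -> form.

Definition FForall (x : nat) (f : form) : form := FNot (FExists x (FNot f)).

Fixpoint qfree (f : form) : Prop :=
  match f with
  | FGe _ _ | FEmp | FPto _ _ => True
  | FSep a b | FWand a b | FAnd a b => qfree a /\ qfree b
  | FNot a => qfree a
  | FExists _ _ => False
  end.

Fixpoint term_vars_below (k : nat) (t : term) : Prop :=
  match t with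
  | TVar i => (i < k)%nat
  | TNil | TZero | TOne => True
  | TPlus a b => term_vars_below k a /\ term_vars_below k b
  end.

Fixpoint vars_below (k : nat) (f : form) : Prop :=
  match f with
  | FGe t u | FPto t u => term_vars_below k t /\ term_vars_below k u
  | FEmp => True
  | FSep a b | FWand a b | FAnd a b => vars_below k a /\ vars_below k b
  | FNot a => vars_below k a
  | FExists _ a => vars_below k a
  end.

(* The sentence  exists x_0 .. x_{m-1} forall x_m .. x_{m+n-1} . phi *)
Fixpoint forall_block (start n : nat) (f : form) : form :=
  match n with
  | O => f
  | S n' => FForall start (forall_block (S start) n' f)
  end.

Fixpoint exists_block (start m : nat) (f : form) : form :=
  match m with
  | O => f
  | S m' => FExists start (exists_block (S start) m' f)
  end.

Definition EA_sentence (m n : nat) (phi : form) : form :=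
  exists_block 0 m (forall_block m n phi).

Definition heap := Z -> option Z.

Definition finite_heap (h : heap) : Prop :=
  exists l : list Z, forall x, h x <> None -> In x l.

Definition hdisjoint (h1 h2 : heap) : Prop :=
  forall x, h1 x = None \/ h2 x = None.

Definition hunion (h1 h2 : heap) : heap :=
  fun x => match h1 x with Some v => Some v | None => h2 x end.

Definition env := nat -> Z.

Definition upd (e : env) (x : nat) (s : Z) : env :=
  fun y => if Nat.eqb y x then s else e y.

Fixpoint teval (nilv : Z) (e : env) (t : term) : Z :=
  match t with
  | TVar i => e i
  | TNil => nilv
  | TZero => 0
  | TOne => 1
  | TPlus a b => teval nilv e a + teval nilv e b
  end.

Fixpoint sat (nilv : Z) (e : env) (h : heap) (f : form) : Prop :=
  match f with
  | FGe t u => teval nilv e t >= teval nilv e u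
  | FEmp => forall x, h x = None
  | FPto t u =>
      teval nilv e t <> nilv /\
      h (teval nilv e t) = Some (teval nilv e u) /\
      (forall x, x <> teval nilv e t -> h x = None)
  | FSep a b =>
      exists h1 h2, finite_heap h1 /\ finite_heap h2 /\ hdisjoint h1 h2 /\
        (forall x, h x = hunion h1 h2 x) /\
        sat nilv e h1 a /\ sat nilv e h2 b
  | FWand a b =>
      forall h', finite_heap h' -> hdisjoint h' h -> sat nilv e h' a ->
        sat nilv e (hunion h' h) b
  | FNot a => ~ sat nilv e h a
  | FAnd a b => sat nilv e h a /\ sat nilv e h b
  | FExists x a => exists s : Z, sat nilv (upd e x s) h a
  end.

(* Satisfiability of a sentence: some interpretation (of nil; LIA symbols
   are standard) and some finite heap satisfy it.  The environment is
   irrelevant for sentences; we fix it to the constant 0. *)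
Definition satisfiable (f : form) : Prop :=
  exists (nilv : Z) (h : heap), finite_heap h /\ sat nilv (fun _ => 0) h f.

Inductive recf : Type :=
| RZero : recf
| RSucc : recf
| RProj : nat -> recf
| RComp : recf -> list recf -> recf
| RPrec : recf -> recf -> recf
| RMu   : recf -> recf.

Inductive reval : recf -> list nat -> nat -> Prop :=
| ev_zero v : reval RZero v 0
| ev_succ x v : reval RSucc (x :: v) (S x)
| ev_proj i v : (i < length v)%nat -> reval (RProj i) v (nth i v 0%nat)
| ev_comp f gs v ws y :
    revals gs v ws -> reval f ws y -> reval (RComp f gs) v y
| ev_prec0 f g v y : reval f v y -> reval (RPrec f g) (0%nat :: v) y
| ev_precS f g n v r y :
    reval (RPrec f g) (n :: v) r -> reval g (n :: r :: v) y ->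
    reval (RPrec f g) (S n :: v) y
| ev_mu f v n :
    reval f (n :: v) 0%nat ->
    (forall k, (k < n)%nat -> exists r, reval f (k :: v) (S r)) ->
    reval (RMu f) v n
with revals : list recf -> list nat -> list nat -> Prop :=
| evs_nil v : revals [] v []
| evs_cons g gs v w ws : reval g v w -> revals gs v ws -> revals (g :: gs) v (w :: ws).

Definition cpair (a b : nat) : nat := ((a + b) * S (a + b) / 2 + b)%nat.

Fixpoint code_term (t : term) : nat :=
  match t with
  | TVar i => cpair 0 i
  | TNil => cpair 1 0
  | TZero => cpair 2 0
  | TOne => cpair 3 0
  | TPlus a b => cpair 4 (cpair (code_term a) (code_term b))
  end.

Fixpoint code_form (f : form) : nat :=
  match f with
  | FGe t u => cpair 0 (cpair (code_term t) (code_term u))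
  | FEmp => cpair 1 0
  | FPto t u => cpair 2 (cpair (code_term t) (code_term u))
  | FSep a b => cpair 3 (cpair (code_form a) (code_form b))
  | FWand a b => cpair 4 (cpair (code_form a) (code_form b))
  | FNot a => cpair 5 (code_form a)
  | FAnd a b => cpair 6 (cpair (code_form a) (code_form b))
  | FExists x a => cpair 7 (cpair x (code_form a))
  end.

Definition code_EA (m n : nat) (phi : form) : nat :=
  cpair m (cpair n (code_form phi)).

Definition decides_EA_sat (d : recf) : Prop :=
  forall (m n : nat) (phi : form),
    qfree phi -> vars_below (m + n) phi ->
    (satisfiable (EA_sentence m n phi) -> reval d [code_EA m n phi] 1%nat) /\
    (~ satisfiable (EA_sentence m n phi) -> reval d [code_EA m n phi] 0%nat).

(* Main.v *)
Require Import Defs.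
From Stdlib Require Import ZArith List Arith Lia Classical FunctionalExtensionality ClassicalEpsilon.
Import ListNotations.
Open Scope Z_scope.

Definition TRUE : form := FGe TZero TZero.
Definition FALSE : form := FNot TRUE.
Definition Imp (a b : form) : form := FNot (FAnd a (FNot b)).
Fixpoint ANDl (l : list form) : form :=
  match l with [] => TRUE | f :: l' => FAnd f (ANDl l') end.
Definition EQ (t u : term) : form := FAnd (FGe t u) (FGe u t).
Fixpoint num (n : nat) : term :=
  match n with O => TZero | S k => TPlus (num k) TOne end.
Definition read (t u : term) : form := FSep (FPto t u) TRUE.
Definition alloc (t : term) : form :=
  FAnd (FNot (EQ t TNil)) (FWand (FPto t TZero) FALSE).

Lemma teval_num nv e n : teval nv e (num n) = Z.of_nat n.
Proof. induction n; simpl; [reflexivity| rewrite IHn; lia]. Qed.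

Lemma sat_TRUE nv e h : sat nv e h TRUE.
Proof. simpl; lia. Qed.

Lemma sat_Imp nv e h a b : sat nv e h (Imp a b) <-> (sat nv e h a -> sat nv e h b).
Proof. simpl. split; intros H. intros Ha. apply NNPP. intros Hb. apply H. auto.
  intros [Ha Hb]. auto. Qed.

Lemma sat_ANDl nv e h l : sat nv e h (ANDl l) <-> Forall (sat nv e h) l.
Proof. induction l; simpl. split; auto. intros; lia.
  rewrite IHl. split. intros [H1 H2]; constructor; auto. intros H; inversion H; auto. Qed.

Lemma sat_EQ nv e h t u : sat nv e h (EQ t u) <-> teval nv e t = teval nv e u.
Proof. simpl. lia. Qed.

Lemma sat_read nv e h t u : finite_heap h ->
  (sat nv e h (read t u) <-> teval nv e t <> nv /\ h (teval nv e t) = Some (teval nv e u)).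
Proof.
  intros [l Hl]. simpl. split.
  - intros (h1 & h2 & _ & _ & _ & Hu & (Hn & H1 & _) & _). split; auto.
    rewrite Hu. unfold hunion. rewrite H1. auto.
  - intros [Hn Hh].
    set (tv := teval nv e t). set (uv := teval nv e u).
    exists (fun x => if Z.eq_dec x tv then Some uv else None).
    exists (fun x => if Z.eq_dec x tv then None else h x).
    split. exists [tv]. intros x Hx. destruct (Z.eq_dec x tv); [left; auto | congruence].
    split. exists l. intros x. destruct (Z.eq_dec x tv); [congruence | apply Hl].
    split. intros x. destruct (Z.eq_dec x tv); auto.
    split. intros x. unfold hunion. destruct (Z.eq_dec x tv); subst; auto.
    split. split; auto. split. destruct (Z.eq_dec tv tv); congruence.
      intros x Hx. destruct (Z.eq_dec x tv); congruence.
    lia.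
Qed.

Lemma sat_alloc nv e h t :
  sat nv e h (alloc t) <-> teval nv e t <> nv /\ h (teval nv e t) <> None.
Proof.
  unfold alloc. simpl. split.
  - intros [Hn Hw]. assert (teval nv e t <> nv) by lia. split; auto.
    intros Hh. set (tv := teval nv e t) in *.
    apply (Hw (fun x => if Z.eq_dec x tv then Some 0 else None)).
    + exists [tv]. intros x Hx. destruct (Z.eq_dec x tv); [left; auto | congruence].
    + intros x. destruct (Z.eq_dec x tv); subst; auto.
    + split; auto. split. destruct (Z.eq_dec tv tv); congruence.
      intros x Hx. destruct (Z.eq_dec x tv); congruence.
    + lia.
  - intros [Hn Hh]. split. lia.
    intros h' _ Hd (_ & H1 & _). exfalso. destruct (Hd (teval nv e t)); congruence.
Qed.

Lemma sat_exists_block nv h f : forall m s e,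
  sat nv e h (exists_block s m f) <->
  exists e', (forall i, (i < s \/ s + m <= i)%nat -> e' i = e i) /\ sat nv e' h f.
Proof.
  induction m; intros s e; simpl.
  - split. intros H. exists e. auto. intros (e' & He & H).
    assert (e' = e) by (apply FunctionalExtensionality.functional_extensionality; intros i; apply He; lia).
    subst; auto.
  - split.
    + intros (v & Hv). apply IHm in Hv. destruct Hv as (e' & He & H). exists e'. split; auto.
      intros i Hi. rewrite He by lia. unfold upd. destruct (Nat.eqb_spec i s); [lia|auto].
    + intros (e' & He & H). exists (e' s). apply IHm. exists e'. split; auto.
      intros i Hi. unfold upd. destruct (Nat.eqb_spec i s); [subst; auto|]. apply He. lia.
Qed.

Lemma sat_forall_block nv h f : forall n s e,
  sat nv e h (forall_block s n f) <->
  forall e', (forall i, (i < s \/ s + n <= i)%nat -> e' i = e i) -> sat nv e' h f.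
Proof.
  induction n; intros s e; simpl.
  - split. intros H e' He.
    assert (e' = e) by (apply FunctionalExtensionality.functional_extensionality; intros i; apply He; lia).
    subst; auto. intros H. apply H. auto.
  - split.
    + intros H e' He. apply NNPP. intros Hn. apply H. exists (e' s). intros Hs.
      rewrite IHn in Hs. apply Hn. apply Hs. intros i Hi. unfold upd.
      destruct (Nat.eqb_spec i s); [subst; auto|]. apply He. lia.
    + intros H [v Hv]. apply Hv. rewrite IHn. intros e' He. apply H. intros i Hi.
      rewrite He by lia. unfold upd. destruct (Nat.eqb_spec i s); [lia|auto].
Qed.

Section RI.
Variable P : recf -> list nat -> nat -> Prop.
Variable Ps : list recf -> list nat -> list nat -> Prop.
Hypothesis Hzero : forall v, P RZero v 0.
Hypothesis Hsucc : forall x v, P RSucc (x :: v) (S x).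
Hypothesis Hproj : forall i v, (i < length v)%nat -> P (RProj i) v (nth i v 0%nat).
Hypothesis Hcomp : forall f gs v ws y, revals gs v ws -> Ps gs v ws -> reval f ws y -> P f ws y -> P (RComp f gs) v y.
Hypothesis Hprec0 : forall f g v y, reval f v y -> P f v y -> P (RPrec f g) (0%nat :: v) y.
Hypothesis HprecS : forall f g n v r y, reval (RPrec f g) (n :: v) r -> P (RPrec f g) (n :: v) r ->
   reval g (n :: r :: v) y -> P g (n :: r :: v) y -> P (RPrec f g) (S n :: v) y.
Hypothesis Hmu : forall f v n, reval f (n :: v) 0%nat -> P f (n :: v) 0%nat ->
   (forall k, (k < n)%nat -> exists r, reval f (k :: v) (S r) /\ P f (k :: v) (S r)) -> P (RMu f) v n.
Hypothesis Hnil : forall v, Ps [] v [].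
Hypothesis Hcons : forall g gs v w ws, reval g v w -> P g v w -> revals gs v ws -> Ps gs v ws -> Ps (g :: gs) v (w :: ws).

Fixpoint reval_ind2 f v y (H : reval f v y) {struct H} : P f v y :=
  match H in reval f v y return P f v y with
  | ev_zero v => Hzero v
  | ev_succ x v => Hsucc x v
  | ev_proj i v Hi => Hproj i v Hi
  | ev_comp f gs v ws y Hs Hf => Hcomp f gs v ws y Hs (revals_ind2 gs v ws Hs) Hf (reval_ind2 f ws y Hf)
  | ev_prec0 f g v y Hf => Hprec0 f g v y Hf (reval_ind2 _ _ _ Hf)
  | ev_precS f g n v r y H1 H2 => HprecS f g n v r y H1 (reval_ind2 _ _ _ H1) H2 (reval_ind2 _ _ _ H2)
  | ev_mu f v n H0 Hall => Hmu f v n H0 (reval_ind2 _ _ _ H0)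
      (fun k hk => match Hall k hk with ex_intro _ r Hr => ex_intro _ r (conj Hr (reval_ind2 _ _ _ Hr)) end)
  end
with revals_ind2 gs v ws (H : revals gs v ws) {struct H} : Ps gs v ws :=
  match H in revals gs v ws return Ps gs v ws with
  | evs_nil v => Hnil v
  | evs_cons g gs v w ws Hg Hgs => Hcons g gs v w ws Hg (reval_ind2 _ _ _ Hg) Hgs (revals_ind2 _ _ _ Hgs)
  end.
End RI.

Lemma reval_det : forall f v y, reval f v y -> forall y', reval f v y' -> y = y'.
Proof.
  apply (reval_ind2 (fun f v y => forall y', reval f v y' -> y = y')
                    (fun gs v ws => forall ws', revals gs v ws' -> ws = ws')).
  - intros v y' H. inversion H; auto.
  - intros x v y' H. inversion H; auto.
  - intros i v _ y' H. inversion H; auto.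
  - intros f gs v ws y _ IHs _ IHf y' H. inversion H; subst.
    match goal with Hx : revals _ _ _ |- _ => apply IHs in Hx end. subst. auto.
  - intros f g v y _ IH y' H. inversion H; subst. auto.
  - intros f g n v r y _ IH1 _ IH2 y' H. inversion H; subst.
    match goal with Hx : reval (RPrec _ _) _ _ |- _ => apply IH1 in Hx end. subst. auto.
  - intros f v n _ IH0 Hall y' H. inversion H; subst.
    destruct (lt_eq_lt_dec n y') as [[Hlt|Heq]|Hgt]; auto.
    + match goal with Hx : forall k, (k < y')%nat -> _ |- _ => destruct (Hx _ Hlt) as (r & Hr) end.
      apply IH0 in Hr. discriminate.
    + destruct (Hall _ Hgt) as (r & _ & Hr).
      match goal with Hx : reval f (y' :: v) 0 |- _ => apply Hr in Hx end. discriminate.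
  - intros v ws' H. inversion H; auto.
  - intros g gs v w ws _ IHg _ IHgs ws' H. inversion H; subst.
    f_equal; auto.
Qed.

Fixpoint const (c : nat) : recf :=
  match c with O => RZero | S k => RComp RSucc [const k] end.

Lemma const_ev c v : reval (const c) v c.
Proof.
  induction c; simpl. constructor.
  eapply ev_comp. constructor. apply IHc. constructor. constructor.
Qed.

Lemma ev_comp1 f g v w y : reval g v w -> reval f [w] y -> reval (RComp f [g]) v y.
Proof. intros. eapply ev_comp; eauto. repeat constructor; auto. Qed.
Lemma ev_comp2 f g1 g2 v w1 w2 y : reval g1 v w1 -> reval g2 v w2 -> reval f [w1; w2] y ->
  reval (RComp f [g1; g2]) v y.
Proof. intros. eapply ev_comp; eauto. repeat constructor; auto. Qed.

Lemma ev_proj' i v y : (i < length v)%nat -> nth i v 0%nat = y -> reval (RProj i) v y.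
Proof. intros H <-. constructor; auto. Qed.

Definition addp : recf := RPrec (RProj 0) (RComp RSucc [RProj 1]).
Lemma addp_ev n m : reval addp [n; m] (n + m)%nat.
Proof.
  induction n. apply ev_prec0. apply ev_proj'; simpl; auto.
  eapply ev_precS. apply IHn. apply ev_comp1 with (w := (n+m)%nat).
  apply ev_proj'; simpl; auto. constructor.
Qed.

Fixpoint trif (s : nat) : nat := match s with O => O | S n => (trif n + S n)%nat end.
Definition trip : recf := RPrec RZero (RComp addp [RProj 1; RComp RSucc [RProj 0]]).
Lemma trip_ev s : reval trip [s] (trif s).
Proof.
  induction s. apply ev_prec0. constructor.
  eapply ev_precS. apply IHs. simpl.
  eapply ev_comp2 with (w1 := trif s) (w2 := S s). apply ev_proj'; simpl; auto.
  apply ev_comp1 with (w := s). apply ev_proj'; simpl; auto. constructor.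
  apply addp_ev.
Qed.

Lemma trif_eq s : (2 * trif s = s * S s)%nat.
Proof. induction s; simpl trif; nia. Qed.

Lemma cpair_tri a b : cpair a b = (trif (a + b) + b)%nat.
Proof.
  unfold cpair. f_equal. rewrite <- trif_eq. rewrite Nat.mul_comm. apply Nat.div_mul. lia.
Qed.

Definition cpp : recf := RComp addp [RComp trip [addp]; RProj 1].
Lemma cpp_ev a b : reval cpp [a; b] (cpair a b).
Proof.
  rewrite cpair_tri. eapply ev_comp2. apply ev_comp1 with (w := (a+b)%nat). apply addp_ev.
  apply trip_ev. apply ev_proj'; simpl; auto. apply addp_ev.
Qed.

Definition cp (g1 g2 : recf) : recf := RComp cpp [g1; g2].
Lemma cp_ev g1 g2 v a b : reval g1 v a -> reval g2 v b -> reval (cp g1 g2) v (cpair a b).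
Proof. intros. eapply ev_comp2; eauto. apply cpp_ev. Qed.

Definition cnp : recf := RPrec (const (cpair 2 0)) (cp (const 4) (cp (RProj 1) (const (cpair 3 0)))).
Lemma cnp_ev y : reval cnp [y] (code_term (num y)).
Proof.
  induction y; simpl. apply ev_prec0. apply const_ev.
  eapply ev_precS. apply IHy. apply cp_ev. apply const_ev. apply cp_ev.
  apply ev_proj'; simpl; auto. apply const_ev.
Qed.

Definition c00 := cpair 0 0.
Definition Eprog : recf :=
  cp (const 6) (cp (cp (const 0) (cp (const c00) cnp)) (cp (const 0) (cp cnp (const c00)))).
Lemma Eprog_ev y : reval Eprog [y] (code_form (EQ (TVar 0) (num y))).
Proof.
  simpl. repeat apply cp_ev; try apply const_ev; apply cnp_ev.
Qed.
Definition Kp (M N : nat) : recf :=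
  cp (const M) (cp (const N) (cp (const 6) (cp Eprog (RProj 0)))).
Lemma Kp_ev M N B : reval (Kp M N) [code_form B] (code_EA M N (FAnd (EQ (TVar 0) (num (code_form B))) B)).
Proof.
  unfold code_EA. simpl code_form at 2.
  apply cp_ev; [apply const_ev|]. apply cp_ev; [apply const_ev|]. apply cp_ev; [apply const_ev|].
  apply cp_ev. apply Eprog_ev. apply ev_proj'; simpl; auto.
Qed.

Inductive kind := KMain | KChain.
Definition desc := (kind * recf * nat)%type.
Fixpoint subtree (f : recf) (ar : nat) : list desc :=
 (KMain, f, ar) :: match f with
 | RComp g gs => subtree g (length gs) ++ flat_map (fun h => subtree h ar) gs
 | RPrec g1 g2 => subtree g1 (pred ar) ++ subtree g2 (S ar)
 | RMu g => (KChain, g, ar) :: subtree g (S ar)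
 | _ => [] end.

Definition desc_eq_dec (a b : desc) : {a = b} + {a <> b} := excluded_middle_informative (a = b).
Fixpoint idx (D : desc) (l : list desc) : nat :=
  match l with [] => O | D' :: l' => if desc_eq_dec D D' then O else S (idx D l') end.

Lemma idx_nth D l d : In D l -> nth (idx D l) l d = D.
Proof.
  induction l; simpl; [tauto|]. intros H. destruct (desc_eq_dec D a); auto.
  destruct H; [congruence|auto].
Qed.
Lemma idx_inj D1 D2 l : In D1 l -> In D2 l -> idx D1 l = idx D2 l -> D1 = D2.
Proof.
  intros H1 H2 E. rewrite <- (idx_nth D1 l D1 H1), <- (idx_nth D2 l D1 H2). rewrite E. auto.
Qed.

Inductive fref := FX (o : nat) | FZ (o : nat).
Inductive atom := AEq (r1 : fref) (c1 : nat) (r2 : fref) (c2 : nat) | AGe (r : fref) (c : nat)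
  | AEqC (r : fref) (c : nat) | AFalse.
Record rule := mkR { rtag : nat; rg : list atom; rsub : option (nat * nat); rc : list atom }.

Definition WW (L : nat) : nat := (3 * L + 3)%nat.
Definition INo (i : nat) : nat := S i.
Definition OUTo (L : nat) : nat := S L.
Definition PTRo (L j : nat) : nat := (L + 2 + j)%nat.
Definition AUXo (L j : nat) : nat := (2 * L + 3 + j)%nat.

Definition nonneg (L ar : nat) : list atom :=
  map (fun i => AGe (FX (INo i)) 0) (seq 0 ar) ++ [AGe (FX (OUTo L)) 0].

Definition selfrules (L : nat) (nds : list desc) (D : desc) : list rule :=
  let t := idx D nds in
  let tg := fun D' => idx D' nds in
  let OUT := OUTo L in
  match D with
  | (KMain, RZero, ar) => [mkR t [] None (nonneg L ar ++ [AEqC (FX OUT) 0])]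
  | (KMain, RSucc, ar) => match ar with O => [mkR t [] None [AFalse]]
        | _ => [mkR t [] None (nonneg L ar ++ [AEq (FX OUT) 0 (FX (INo 0)) 1])] end
  | (KMain, RProj i, ar) => if Nat.ltb i ar then
        [mkR t [] None (nonneg L ar ++ [AEq (FX OUT) 0 (FX (INo i)) 0])]
        else [mkR t [] None [AFalse]]
  | (KMain, RComp g gs, ar) =>
      mkR t [] None (nonneg L ar) ::
      mkR t [] (Some (PTRo L (length gs), tg (KMain, g, length gs)))
          (map (fun i => AEq (FZ (INo i)) 0 (FX (AUXo L i)) 0) (seq 0 (length gs))
             ++ [AEq (FZ OUT) 0 (FX OUT) 0]) ::
      map (fun j => mkR t [] (Some (PTRo L j, tg (KMain, nth j gs RZero, ar)))
          (map (fun i => AEq (FZ (INo i)) 0 (FX (INo i)) 0) (seq 0 ar)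
             ++ [AEq (FZ OUT) 0 (FX (AUXo L j)) 0]))
        (seq 0 (length gs))
  | (KMain, RPrec g1 g2, ar) => match ar with O => [mkR t [] None [AFalse]]
      | S a' => [mkR t [] None (nonneg L ar);
                 mkR t [AEqC (FX (INo 0)) 0] (Some (PTRo L 0, tg (KMain, g1, a')))
                    (map (fun i => AEq (FZ (INo i)) 0 (FX (INo (S i))) 0) (seq 0 a')
                      ++ [AEq (FZ OUT) 0 (FX OUT) 0]);
                 mkR t [AGe (FX (INo 0)) 1] (Some (PTRo L 0, t))
                    (AEq (FZ (INo 0)) 1 (FX (INo 0)) 0 ::
                     map (fun i => AEq (FZ (INo (S i))) 0 (FX (INo (S i))) 0) (seq 0 a')
                      ++ [AEq (FZ OUT) 0 (FX (AUXo L 0)) 0]);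
                 mkR t [AGe (FX (INo 0)) 1] (Some (PTRo L 1, tg (KMain, g2, S ar)))
                    (AEq (FZ (INo 0)) 1 (FX (INo 0)) 0 :: AEq (FZ (INo 1)) 0 (FX (AUXo L 0)) 0 ::
                     map (fun i => AEq (FZ (INo (S (S i)))) 0 (FX (INo (S i))) 0) (seq 0 a')
                      ++ [AEq (FZ OUT) 0 (FX OUT) 0])] end
  | (KMain, RMu g, ar) => [mkR t [] None (nonneg L ar);
        mkR t [] (Some (PTRo L 0, tg (KMain, g, S ar)))
          (AEq (FZ (INo 0)) 0 (FX OUT) 0 ::
           map (fun i => AEq (FZ (INo (S i))) 0 (FX (INo i)) 0) (seq 0 ar) ++ [AEqC (FZ OUT) 0]);
        mkR t [] (Some (PTRo L 1, tg (KChain, g, ar)))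
          (map (fun i => AEq (FZ (INo i)) 0 (FX (INo i)) 0) (seq 0 ar) ++ [AEq (FZ OUT) 0 (FX OUT) 0])]
  | (KChain, g, ar) => [mkR t [] None (nonneg L ar);
        mkR t [AGe (FX OUT) 1] (Some (PTRo L 0, tg (KMain, g, S ar)))
          (AEq (FZ (INo 0)) 1 (FX OUT) 0 ::
           map (fun i => AEq (FZ (INo (S i))) 0 (FX (INo i)) 0) (seq 0 ar) ++ [AGe (FZ OUT) 1]);
        mkR t [AGe (FX OUT) 1] (Some (PTRo L 1, t))
          (map (fun i => AEq (FZ (INo i)) 0 (FX (INo i)) 0) (seq 0 ar) ++ [AEq (FZ OUT) 1 (FX OUT) 0])]
  end.

Lemma selfrules_tag L nds D x : In x (selfrules L nds D) -> rtag x = idx D nds.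
Proof.
  destruct D as [[[|] f] ar]; simpl;
  [destruct f; try destruct ar; try destruct (Nat.ltb _ _)|]; simpl;
  intros H; repeat (destruct H as [<-|H]; [reflexivity|]); try contradiction;
  apply in_map_iff in H; destruct H as (j & <- & _); reflexivity.
Qed.

Definition fval (W : nat) (va vp : nat -> Z) (r : fref) : Z :=
  match r with FX o => va (Nat.min o (W - 1)) | FZ o => vp (Nat.min o (W - 1)) end.
Definition asem (W : nat) (va vp : nat -> Z) (a : atom) : Prop :=
  match a with
  | AEq r1 c1 r2 c2 => fval W va vp r1 + Z.of_nat c1 = fval W va vp r2 + Z.of_nat c2
  | AGe r c => fval W va vp r >= Z.of_nat c
  | AEqC r c => fval W va vp r = Z.of_nat c
  | AFalse => False end.

Definition tr_fref (W zb : nat) (r : fref) : term :=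
  match r with FX o => TVar (3 + Nat.min o (W - 1)) | FZ o => TVar (zb + Nat.min o (W - 1)) end.
Definition tr_atom (W zb : nat) (a : atom) : form :=
  match a with
  | AEq r1 c1 r2 c2 => EQ (TPlus (tr_fref W zb r1) (num c1)) (TPlus (tr_fref W zb r2) (num c2))
  | AGe r c => FGe (tr_fref W zb r) (num c)
  | AEqC r c => EQ (tr_fref W zb r) (num c)
  | AFalse => FALSE end.

Lemma sat_tr_atom W zb nv e h a :
  sat nv e h (tr_atom W zb a) <-> asem W (fun o => e (3 + o)%nat) (fun o => e (zb + o)%nat) a.
Proof.
  destruct a as [[] c1 [] c2|[] c|[] c|]; simpl; rewrite ?teval_num; try lia.
Qed.

Lemma asem_ext W va vp va' vp' a : (1 <= W)%nat ->
  (forall o, (o < W)%nat -> va o = va' o) -> (forall o, (o < W)%nat -> vp o = vp' o) ->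
  (asem W va vp a <-> asem W va' vp' a).
Proof.
  intros HW Ha Hp.
  assert (forall r, fval W va vp r = fval W va' vp' r) as E.
  { destruct r; simpl; [apply Ha|apply Hp]; lia. }
  destruct a; simpl; rewrite ?E; tauto.
Qed.

Lemma Forall_asem_ext W va vp va' vp' l : (1 <= W)%nat ->
  (forall o, (o < W)%nat -> va o = va' o) -> (forall o, (o < W)%nat -> vp o = vp' o) ->
  (Forall (asem W va vp) l <-> Forall (asem W va' vp') l).
Proof.
  intros HW Ha Hp. rewrite !Forall_forall. split; intros HH x Hx.
  - apply (asem_ext W va vp va' vp' x HW Ha Hp); auto.
  - apply (asem_ext W va vp va' vp' x HW Ha Hp); auto.
Qed.

Lemma sat_map_tr W zb nv e h l :
  sat nv e h (ANDl (map (tr_atom W zb) l)) <->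
  Forall (asem W (fun o => e (3 + o)%nat) (fun o => e (zb + o)%nat)) l.
Proof.
  rewrite sat_ANDl, Forall_map. rewrite !Forall_forall. split; intros H x Hx.
  apply (proj1 (sat_tr_atom W zb nv e h x)); auto. apply (proj2 (sat_tr_atom W zb nv e h x)); auto.
Qed.

Definition rd (h : heap) (a : Z) : Z := match h a with Some v => v | None => 0 end.
Definition rdv (h : heap) (a : Z) (o : nat) : Z := rd h (a + Z.of_nat o).
Definition ALLc (W : nat) (nv : Z) (h : heap) (a : Z) : Prop :=
  forall o, (o < W)%nat -> a + Z.of_nat o <> nv /\ h (a + Z.of_nat o) <> None.
Definition tagZ (k : nat) : Z := - Z.of_nat (S k).

Definition RuleSemAt (W : nat) (nv : Z) (h : heap) (r : rule) (a : Z) : Prop :=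
  ALLc W nv h a -> h a = Some (tagZ (rtag r)) -> Forall (asem W (rdv h a) (rdv h a)) (rg r) ->
  match rsub r with
  | None => Forall (asem W (rdv h a) (rdv h a)) (rc r)
  | Some (o, k') => let p := a + rdv h a (Nat.min o (W - 1)) in
      ALLc W nv h p /\ h p = Some (tagZ k') /\ Forall (asem W (rdv h a) (rdv h p)) (rc r)
  end.

Definition TAGEQ (t : term) (k : nat) : form := EQ (TPlus t (num (S k))) TZero.
Definition READS (W : nat) (base : term) (s : nat) : form :=
  ANDl (map (fun o => read (TPlus base (num o)) (TVar (s + o))) (seq 0 W)).
Definition ALLOCS (W : nat) (base : term) : form :=
  ANDl (map (fun o => alloc (TPlus base (num o))) (seq 0 W)).

Definition rule_form (W : nat) (r : rule) : form :=
  Imp (ANDl [READS W (TVar 2) 3; TAGEQ (TVar 3) (rtag r); ANDl (map (tr_atom W 3) (rg r))])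
   (match rsub r with
    | None => ANDl (map (tr_atom W 3) (rc r))
    | Some (o, k') =>
       FAnd (ALLOCS W (TPlus (TVar 2) (TVar (3 + Nat.min o (W - 1)))))
        (Imp (READS W (TPlus (TVar 2) (TVar (3 + Nat.min o (W - 1)))) (3 + W))
           (FAnd (TAGEQ (TVar (3 + W)) k') (ANDl (map (tr_atom W (3 + W)) (rc r)))))
    end).

Definition root_form (W L kroot : nat) : form :=
  FAnd (ALLOCS W (TVar 1))
    (Imp (READS W (TVar 1) (3 + W))
       (ANDl [TAGEQ (TVar (3 + W)) kroot; EQ (TVar (3 + W + INo 0)) (TVar 0);
              EQ (TVar (3 + W + OUTo L)) TZero])).

Definition RootSem (W L : nat) (nv : Z) (h : heap) (v0 r : Z) (kroot : nat) : Prop :=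
  ALLc W nv h r /\ h r = Some (tagZ kroot) /\ rdv h r (INo 0) = v0 /\ rdv h r (OUTo L) = 0.

Definition matrix (W L kroot : nat) (Rs : list rule) : form :=
  ANDl (root_form W L kroot :: map (rule_form W) Rs).

Lemma sat_TAGEQ nv e h t k : sat nv e h (TAGEQ t k) <-> teval nv e t = tagZ k.
Proof. unfold TAGEQ, tagZ. rewrite sat_EQ. simpl. rewrite teval_num. lia. Qed.

Lemma sat_READS W nv e h base s : finite_heap h ->
  (sat nv e h (READS W base s) <-> forall o, (o < W)%nat ->
     teval nv e base + Z.of_nat o <> nv /\ h (teval nv e base + Z.of_nat o) = Some (e (s + o)%nat)).
Proof.
  intros Hf. unfold READS. rewrite sat_ANDl, Forall_map, Forall_forall.
  split; intros H o.
  - intros Ho. assert (In o (seq 0 W)) as Hi by (apply in_seq; lia).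
    apply H in Hi. apply sat_read in Hi; auto. simpl in Hi. rewrite teval_num in Hi. auto.
  - intros Hi. apply in_seq in Hi. apply sat_read; auto. simpl. rewrite teval_num. apply H. lia.
Qed.

Lemma sat_ALLOCS W nv e h base :
  sat nv e h (ALLOCS W base) <-> ALLc W nv h (teval nv e base).
Proof.
  unfold ALLOCS, ALLc. rewrite sat_ANDl, Forall_map, Forall_forall.
  split; intros H o.
  - intros Ho. assert (In o (seq 0 W)) as Hi by (apply in_seq; lia).
    apply H in Hi. apply sat_alloc in Hi. simpl in Hi. rewrite teval_num in Hi. auto.
  - intros Hi. apply in_seq in Hi. apply sat_alloc. simpl. rewrite teval_num. apply H. lia.
Qed.

Definition Eenv (W : nat) (h : heap) (e : env) (a p : Z) : env := fun i =>
  if Nat.ltb i 2 then e i else if Nat.eqb i 2 then a else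
  if Nat.ltb i (3 + W) then rdv h a (i - 3) else
  if Nat.ltb i (3 + W + W) then rdv h p (i - 3 - W) else e i.

Lemma Eenv_agree W h e a p i : (i < 2 \/ 3 + W + W <= i)%nat -> Eenv W h e a p i = e i.
Proof.
  intros Hi. unfold Eenv. destruct (Nat.ltb_spec i 2); auto.
  destruct (Nat.eqb_spec i 2); [lia|]. destruct (Nat.ltb_spec i (3+W)); [lia|].
  destruct (Nat.ltb_spec i (3+W+W)); [lia|auto].
Qed.
Lemma Eenv_X W h e a p o : (o < W)%nat -> Eenv W h e a p (3 + o)%nat = rdv h a o.
Proof.
  intros Ho. unfold Eenv. destruct (Nat.ltb_spec (3+o) 2); [lia|].
  destruct (Nat.eqb_spec (3+o) 2); [lia|]. destruct (Nat.ltb_spec (3+o) (3+W)); [|lia].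
  f_equal. lia.
Qed.
Lemma Eenv_Z W h e a p o : (o < W)%nat -> Eenv W h e a p (3 + W + o)%nat = rdv h p o.
Proof.
  intros Ho. unfold Eenv. destruct (Nat.ltb_spec (3+W+o) 2); [lia|].
  destruct (Nat.eqb_spec (3+W+o) 2); [lia|]. destruct (Nat.ltb_spec (3+W+o) (3+W)); [lia|].
  destruct (Nat.ltb_spec (3+W+o) (3+W+W)); [|lia]. f_equal. lia.
Qed.
Lemma Eenv_2 W h e a p : Eenv W h e a p 2%nat = a.
Proof. reflexivity. Qed.

Lemma some_rd h a : h a <> None -> h a = Some (rd h a).
Proof. unfold rd. destruct (h a); congruence. Qed.

Lemma rule_sem W nv h e r : finite_heap h -> (1 <= W)%nat ->
  (forall e', (forall i, (i < 2 \/ 3 + W + W <= i)%nat -> e' i = e i) -> sat nv e' h (rule_form W r))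
  <-> (forall a, RuleSemAt W nv h r a).
Proof.
  intros Hf HW. split.
  - intros H a Hall Htag Hg.
    set (p := match rsub r with Some (o, _) => a + rdv h a (Nat.min o (W - 1)) | None => a end).
    specialize (H (Eenv W h e a p) (Eenv_agree W h e a p)).
    unfold rule_form in H. rewrite sat_Imp in H.
    assert (HX : forall o, (o < W)%nat -> Eenv W h e a p (3 + o)%nat = rdv h a o) by (intros; apply Eenv_X; auto).
    assert (HZ : forall o, (o < W)%nat -> Eenv W h e a p (3 + W + o)%nat = rdv h p o) by (intros; apply Eenv_Z; auto).
    assert (HX' : forall o, (o < W)%nat -> Eenv W h e a p (S (S (S o))) = rdv h a o) by (intros; apply Eenv_X; auto).
    assert (HZ' : forall o, (o < W)%nat -> Eenv W h e a p (S (S (S (W + o)))) = rdv h p o) by (intros; apply Eenv_Z; auto).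
    assert (Hprem : sat nv (Eenv W h e a p) h
       (ANDl [READS W (TVar 2) 3; TAGEQ (TVar 3) (rtag r); ANDl (map (tr_atom W 3) (rg r))])).
    { apply sat_ANDl. constructor; [|constructor; [|constructor; [|constructor]]].
      - apply sat_READS; auto. simpl. rewrite Eenv_2. intros o Ho. destruct (Hall o Ho) as [H1 H2].
        split; auto. rewrite HX' by auto. apply some_rd; auto.
      - apply sat_TAGEQ. simpl. rewrite (HX' 0%nat) by lia. unfold rdv, rd. rewrite Z.add_0_r, Htag. auto.
      - apply sat_map_tr. revert Hg. apply Forall_asem_ext; auto; intros; symmetry; auto. }
    specialize (H Hprem). clear Hprem.
    destruct (rsub r) as [[o k']|].
    + destruct H as [H1 H2]. apply sat_ALLOCS in H1. simpl in H1.
      rewrite Eenv_2, ?HX, ?HX' in H1 by lia. fold p in H1.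
      rewrite sat_Imp in H2.
      assert (Hrd : sat nv (Eenv W h e a p) h (READS W (TPlus (TVar 2) (TVar (3 + Nat.min o (W - 1)))) (3 + W))).
      { apply sat_READS; auto. simpl. rewrite Eenv_2, ?HX, ?HX' by lia. fold p.
        intros o' Ho'. destruct (H1 o' Ho') as [E1 E2]. split; auto.
        rewrite ?HZ, ?HZ' by auto. apply some_rd; auto. }
      apply H2 in Hrd. destruct Hrd as [Ht Hc]. apply sat_TAGEQ in Ht. simpl in Ht.
      assert (Ht' : rdv h p 0 = tagZ k') by (rewrite <- (HZ 0%nat) by lia; rewrite Nat.add_0_r; exact Ht).
      split; auto. split.
      * fold p. destruct (H1 0%nat) as [_ E]; [lia|]. rewrite Z.add_0_r in E. apply some_rd in E.
        rewrite E. unfold rdv in Ht'. rewrite Z.add_0_r in Ht'. rewrite Ht'. auto.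
      * apply sat_map_tr in Hc. revert Hc. apply Forall_asem_ext; auto;
        intros; symmetry; first [apply HX | apply HZ]; auto.
    + apply sat_map_tr in H. revert H. apply Forall_asem_ext; auto;
        intros; symmetry; first [apply HX | apply HZ]; auto.
  - intros H e' He. unfold rule_form. rewrite sat_Imp. intros Hprem.
    apply sat_ANDl in Hprem. inversion Hprem as [|? ? Hr Hp1]; subst.
    inversion Hp1 as [|? ? Ht Hp2]; subst. inversion Hp2 as [|? ? Hg _]; subst.
    rewrite sat_READS in Hr by auto. simpl in Hr. apply sat_TAGEQ in Ht. simpl in Ht.
    set (a := e' 2%nat) in *.
    assert (HX : forall o, (o < W)%nat -> e' (3 + o)%nat = rdv h a o).
    { intros o Ho. destruct (Hr o Ho) as [_ E]. unfold rdv, rd. rewrite E. reflexivity. }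
    assert (HX' : forall o, (o < W)%nat -> e' (S (S (S o))) = rdv h a o) by exact HX.
    assert (Hall : ALLc W nv h a).
    { intros o Ho. destruct (Hr o Ho) as [E1 E2]. split; auto. congruence. }
    assert (Htag : h a = Some (tagZ (rtag r))).
    { destruct (Hr 0%nat) as [_ E]; [lia|]. rewrite Z.add_0_r in E. rewrite E. f_equal. auto. }
    apply sat_map_tr in Hg.
    assert (Hg' : Forall (asem W (rdv h a) (rdv h a)) (rg r)).
    { revert Hg. apply Forall_asem_ext; auto; intros; symmetry; apply HX; auto. }
    specialize (H a Hall Htag Hg').
    destruct (rsub r) as [[o k']|].
    + destruct H as (H1 & H2 & H3). split.
      * apply sat_ALLOCS. simpl. fold a. rewrite ?HX, ?HX' by lia. auto.
      * rewrite sat_Imp. intros Hr2. rewrite sat_READS in Hr2 by auto. simpl in Hr2. fold a in Hr2.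
        rewrite ?HX, ?HX' in Hr2 by lia.
        set (p := a + rdv h a (Nat.min o (W - 1))) in *.
        assert (HZ : forall o', (o' < W)%nat -> e' (3 + W + o')%nat = rdv h p o').
        { intros o' Ho'. destruct (Hr2 o' Ho') as [_ E]. unfold rdv, rd. rewrite E. reflexivity. }
        assert (HZ' : forall o', (o' < W)%nat -> e' (S (S (S (W + o')))) = rdv h p o') by exact HZ.
        split.
        -- apply sat_TAGEQ. simpl. rewrite <- (Nat.add_0_r W). rewrite (HZ' 0%nat) by lia. unfold rdv, rd.
           rewrite Z.add_0_r, H2. auto.
        -- apply sat_map_tr. revert H3. apply Forall_asem_ext; auto; intros; symmetry; first [apply HX | apply HZ]; auto.
    + apply sat_map_tr. revert H. apply Forall_asem_ext; auto; intros; symmetry; apply HX; auto.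
Qed.

Lemma root_sem W L nv h e kroot : finite_heap h -> (L + 3 <= W)%nat ->
  (forall e', (forall i, (i < 2 \/ 3 + W + W <= i)%nat -> e' i = e i) -> sat nv e' h (root_form W L kroot))
  <-> RootSem W L nv h (e 0%nat) (e 1%nat) kroot.
Proof.
  intros Hf HW. split.
  - intros H. set (r := e 1%nat).
    specialize (H (Eenv W h e 0 r) (Eenv_agree W h e 0 r)).
    destruct H as [H1 H2]. apply sat_ALLOCS in H1. simpl in H1.
    assert (E1 : Eenv W h e 0 r 1%nat = r) by reflexivity. rewrite E1 in H1.
    rewrite sat_Imp in H2.
    assert (HZ : forall o, (o < W)%nat -> Eenv W h e 0 r (3 + W + o)%nat = rdv h r o) by (intros; apply Eenv_Z; auto).
    assert (HZ' : forall o, (o < W)%nat -> Eenv W h e 0 r (S (S (S (W + o)))) = rdv h r o) by exact HZ.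
    assert (Hrd : sat nv (Eenv W h e 0 r) h (READS W (TVar 1) (3 + W))).
    { apply sat_READS; auto. simpl. rewrite E1. intros o Ho. destruct (H1 o Ho) as [A1 A2].
      split; auto. rewrite HZ' by auto. apply some_rd; auto. }
    apply H2 in Hrd. apply sat_ANDl in Hrd.
    inversion Hrd as [|? ? Ht Hp1]; subst. inversion Hp1 as [|? ? Hi Hp2]; subst.
    inversion Hp2 as [|? ? Ho _]; subst.
    apply sat_TAGEQ in Ht. apply sat_EQ in Hi. apply sat_EQ in Ho. simpl in Ht, Hi, Ho.
    unfold INo, OUTo in *.
    assert (Ht' : rdv h r 0 = tagZ kroot) by (rewrite <- (HZ 0%nat) by lia; rewrite Nat.add_0_r; exact Ht).
    rewrite HZ' in Hi by lia. rewrite HZ' in Ho by lia.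
    assert (E0 : Eenv W h e 0 r 0%nat = e 0%nat) by reflexivity. rewrite E0 in Hi.
    split; auto. split.
    + destruct (H1 0%nat) as [_ E]; [lia|]. rewrite Z.add_0_r in E. apply some_rd in E.
      rewrite E. unfold rdv in Ht'. rewrite Z.add_0_r in Ht'. rewrite Ht'. auto.
    + split; auto.
  - intros (H1 & H2 & H3 & H4) e' He. split.
    + apply sat_ALLOCS. simpl. rewrite He by lia. auto.
    + rewrite sat_Imp. intros Hr. rewrite sat_READS in Hr by auto. simpl in Hr.
      rewrite He in Hr by lia.
      assert (HZ : forall o, (o < W)%nat -> e' (S (S (S (W + o)))) = rdv h (e 1%nat) o).
      { intros o Ho. destruct (Hr o Ho) as [_ E]. unfold rdv, rd. rewrite E. reflexivity. }
      apply sat_ANDl. constructor; [|constructor; [|constructor; [|constructor]]].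
      * apply sat_TAGEQ. simpl. transitivity (rdv h (e 1%nat) 0).
        rewrite <- (HZ 0%nat) by lia. rewrite Nat.add_0_r. reflexivity. unfold rdv, rd.
        rewrite Z.add_0_r, H2. auto.
      * apply sat_EQ. simpl. unfold INo. rewrite HZ by lia. rewrite He by lia. auto.
      * apply sat_EQ. simpl. unfold OUTo. rewrite HZ by lia. auto.
Qed.

Lemma matrix_sem W L nv h e kroot Rs : finite_heap h -> (L + 3 <= W)%nat ->
  (forall e', (forall i, (i < 2 \/ 3 + W + W <= i)%nat -> e' i = e i) -> sat nv e' h (matrix W L kroot Rs))
  <-> (RootSem W L nv h (e 0%nat) (e 1%nat) kroot /\ forall x, In x Rs -> forall a, RuleSemAt W nv h x a).
Proof.
  intros Hf HW. unfold matrix. split.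
  - intros H. split.
    + apply root_sem; auto. intros e' He. specialize (H e' He). apply sat_ANDl in H.
      inversion H; auto.
    + intros x Hx. apply rule_sem with (e := e); auto. lia. intros e' He. specialize (H e' He).
      apply sat_ANDl in H. inversion H as [|? ? _ Hr]; subst. rewrite Forall_map in Hr.
      rewrite Forall_forall in Hr. auto.
  - intros [Hr Hx] e' He. apply sat_ANDl. constructor.
    + revert e' He. apply root_sem; auto.
    + rewrite Forall_map, Forall_forall. intros x Hin. revert e' He. apply rule_sem; auto. lia.
Qed.

Fixpoint recf_ind2 (P : recf -> Prop) (Hz : P RZero) (Hs : P RSucc) (Hp : forall i, P (RProj i))
  (Hc : forall g gs, P g -> Forall P gs -> P (RComp g gs))
  (Hpr : forall g1 g2, P g1 -> P g2 -> P (RPrec g1 g2))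
  (Hm : forall g, P g -> P (RMu g)) (f : recf) {struct f} : P f :=
  match f with
  | RZero => Hz | RSucc => Hs | RProj i => Hp i
  | RComp g gs => Hc g gs (recf_ind2 P Hz Hs Hp Hc Hpr Hm g)
      ((fix F (l : list recf) : Forall P l := match l with
         | [] => Forall_nil P
         | x :: l' => Forall_cons x (recf_ind2 P Hz Hs Hp Hc Hpr Hm x) (F l') end) gs)
  | RPrec g1 g2 => Hpr g1 g2 (recf_ind2 P Hz Hs Hp Hc Hpr Hm g1) (recf_ind2 P Hz Hs Hp Hc Hpr Hm g2)
  | RMu g => Hm g (recf_ind2 P Hz Hs Hp Hc Hpr Hm g)
  end.

Definition closedN (nds : list desc) : Prop := forall D, In D nds ->
  match D with
  | (KMain, RComp g gs, ar) => In (KMain, g, length gs) nds /\ forall g', In g' gs -> In (KMain, g', ar) nds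
  | (KMain, RPrec g1 g2, ar) => In (KMain, g1, pred ar) nds /\ In (KMain, g2, S ar) nds
  | (KMain, RMu g, ar) => In (KMain, g, S ar) nds /\ In (KChain, g, ar) nds
  | (KChain, g, ar) => In (KMain, g, S ar) nds
  | _ => True end.

Definition arOK (L : nat) (nds : list desc) : Prop := forall D, In D nds -> (snd D < L)%nat.

Definition insv (h : heap) (a : Z) (ar : nat) : list nat :=
  map (fun i => Z.to_nat (rdv h a (INo i))) (seq 0 ar).
Definition outv (h : heap) (L : nat) (a : Z) : nat := Z.to_nat (rdv h a (OUTo L)).

Lemma insv_S h a n : insv h a (S n) =
  Z.to_nat (rdv h a (INo 0)) :: map (fun i => Z.to_nat (rdv h a (INo (S i)))) (seq 0 n).
Proof.
  unfold insv. simpl. rewrite <- seq_shift. rewrite map_map. reflexivity.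
Qed.

Lemma insv_SS h a n : insv h a (S (S n)) =
  Z.to_nat (rdv h a (INo 0)) :: Z.to_nat (rdv h a (INo 1)) ::
  map (fun i => Z.to_nat (rdv h a (INo (S (S i))))) (seq 0 n).
Proof.
  unfold insv. simpl. rewrite <- seq_shift. rewrite map_map. simpl.
  rewrite <- seq_shift. rewrite map_map. reflexivity.
Qed.

Lemma map_seq_ext (F G : nat -> nat) n : (forall i, (i < n)%nat -> F i = G i) ->
  map F (seq 0 n) = map G (seq 0 n).
Proof. intros H. apply map_ext_in. intros i Hi. apply in_seq in Hi. apply H. lia. Qed.

Lemma insv_ext h p n (G : nat -> Z) : (forall i, (i < n)%nat -> rdv h p (INo i) = G i) ->
  insv h p n = map (fun i => Z.to_nat (G i)) (seq 0 n).
Proof.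
  intros H. unfold insv. apply map_ext_in. intros i Hi. apply in_seq in Hi. rewrite H by lia. auto.
Qed.

Lemma nth_insv h a n i : (i < n)%nat -> nth i (insv h a n) 0%nat = Z.to_nat (rdv h a (INo i)).
Proof.
  intros Hi. unfold insv.
  rewrite nth_indep with (d' := (fun i => Z.to_nat (rdv h a (INo i))) 0%nat) by (rewrite length_map, length_seq; auto).
  rewrite (map_nth (fun i => Z.to_nat (rdv h a (INo i))) (seq 0 n) 0%nat i).
  rewrite seq_nth by auto. auto.
Qed.

Lemma length_insv h a n : length (insv h a n) = n.
Proof. unfold insv. rewrite length_map, length_seq. auto. Qed.

Lemma revals_nth gs v (F : nat -> nat) : forall k,
  (forall j, (j < length gs)%nat -> reval (nth j gs RZero) v (F (k + j)%nat)) ->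
  revals gs v (map F (seq k (length gs))).
Proof.
  induction gs; intros k H; simpl. constructor. constructor.
  - specialize (H 0%nat). rewrite Nat.add_0_r in H. apply H. simpl; lia.
  - apply IHgs. intros j Hj. replace (S k + j)%nat with (k + S j)%nat by lia. apply (H (S j)). simpl; lia.
Qed.

Lemma Forall_map_seq {A} (P : A -> Prop) F n : Forall P (map F (seq 0 n)) -> forall i, (i < n)%nat -> P (F i).
Proof.
  rewrite Forall_map, Forall_forall. intros H i Hi. apply H. apply in_seq. lia.
Qed.

Lemma mn L o : (o < WW L)%nat -> Nat.min o (WW L - 1) = o.
Proof. intros. apply Nat.min_l. lia. Qed.

Ltac mins L := repeat rewrite (mn L) in * by (unfold WW, INo, OUTo, PTRo, AUXo in *; lia).

Lemma Fapp {A} (P : A -> Prop) l1 l2 : Forall P (l1 ++ l2) -> Forall P l1 /\ Forall P l2.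
Proof. apply Forall_app. Qed.
Lemma Fcons {A} (P : A -> Prop) x l : Forall P (x :: l) -> P x /\ Forall P l.
Proof. intros H; inversion H; auto. Qed.

Lemma sound L nds nv h (Hcl : closedN nds) (Har : arOK L nds)
  (HR : forall D, In D nds -> forall x, In x (selfrules L nds D) -> forall a, RuleSemAt (WW L) nv h x a) :
  forall f ar, In (KMain, f, ar) nds -> forall a, ALLc (WW L) nv h a ->
    h a = Some (tagZ (idx (KMain, f, ar) nds)) -> reval f (insv h a ar) (outv h L a).
Proof.
  induction f using recf_ind2; intros ar HD a Hall Htag;
  pose proof (Har _ HD) as HarD; simpl in HarD;
  pose proof (HR _ HD) as Hs; simpl in Hs.
  -
    specialize (Hs _ (or_introl eq_refl) a Hall Htag (Forall_nil _)). cbn [rsub rc] in Hs.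
    apply Fapp in Hs. destruct Hs as [_ Hs]. apply Fcons in Hs. destruct Hs as [Hs _].
    cbn [asem fval] in Hs. mins L. unfold outv. rewrite Hs. constructor.
  -
    destruct ar as [|a'].
    + specialize (Hs _ (or_introl eq_refl) a Hall Htag (Forall_nil _)). cbn [rsub rc] in Hs.
      apply Fcons in Hs. destruct Hs as [[] _].
    + specialize (Hs _ (or_introl eq_refl) a Hall Htag (Forall_nil _)). cbn [rsub rc] in Hs.
      apply Fapp in Hs. destruct Hs as [Hn Hs]. apply Fcons in Hs. destruct Hs as [Hs _].
      unfold nonneg in Hn. apply Fapp in Hn. destruct Hn as [Hn _].
      pose proof (Forall_map_seq _ _ _ Hn 0%nat ltac:(lia)) as H0. cbn [asem fval] in H0, Hs.
      mins L. rewrite insv_S. unfold outv.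
      replace (Z.to_nat (rdv h a (OUTo L))) with (S (Z.to_nat (rdv h a (INo 0)))) by lia.
      constructor.
  -
    destruct (Nat.ltb_spec i ar) as [Hi|Hi].
    + specialize (Hs _ (or_introl eq_refl) a Hall Htag (Forall_nil _)). cbn [rsub rc] in Hs.
      apply Fapp in Hs. destruct Hs as [Hn Hs]. apply Fcons in Hs. destruct Hs as [Hs _].
      cbn [asem fval] in Hs. mins L. unfold outv.
      replace (Z.to_nat (rdv h a (OUTo L))) with (nth i (insv h a ar) 0%nat).
      constructor. rewrite length_insv. auto. rewrite nth_insv by auto. lia.
    + specialize (Hs _ (or_introl eq_refl) a Hall Htag (Forall_nil _)). cbn [rsub rc] in Hs.
      apply Fcons in Hs. destruct Hs as [[] _].
  -
    destruct (Hcl _ HD) as [Hf Hgs].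
    pose proof (Har _ Hf) as Harf; simpl in Harf.
    set (m := length gs) in *.
    pose proof (Hs _ (or_intror (or_introl eq_refl)) a Hall Htag (Forall_nil _)) as Hr.
    cbn [rsub rc] in Hr. destruct Hr as (Hp1 & Hp2 & Hp3).
    set (pf := a + rdv h a (Nat.min (PTRo L m) (WW L - 1))) in *.
    apply Fapp in Hp3. destruct Hp3 as [Hin Hout]. apply Fcons in Hout. destruct Hout as [Hout _].
    cbn [asem fval] in Hout. mins L.
    pose proof (IHf m Hf pf Hp1 Hp2) as Ef.
    rewrite (insv_ext h pf m (fun i => rdv h a (AUXo L i))) in Ef.
    2:{ intros i Hi. pose proof (Forall_map_seq _ _ _ Hin i Hi) as Ei. cbn [asem fval] in Ei. mins L. lia. }
    replace (outv h L pf) with (outv h L a) in Ef by (unfold outv; lia).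
    eapply ev_comp; [|exact Ef].
    apply (revals_nth gs (insv h a ar) (fun i => Z.to_nat (rdv h a (AUXo L i))) 0%nat).
    intros j Hj. simpl.
    assert (Hin' : In (nth j gs RZero) gs) by (apply nth_In; auto).
    rewrite Forall_forall in H. specialize (H _ Hin' ar (Hgs _ Hin')).
    pose proof (Hs _ (or_intror (or_intror (in_map _ (seq 0 m) j ltac:(apply in_seq; lia))))
                  a Hall Htag (Forall_nil _)) as Hr.
    cbn [rsub rc] in Hr. destruct Hr as (Hq1 & Hq2 & Hq3).
    set (pj := a + rdv h a (Nat.min (PTRo L j) (WW L - 1))) in *.
    apply Fapp in Hq3. destruct Hq3 as [Hin2 Hout2]. apply Fcons in Hout2. destruct Hout2 as [Hout2 _].
    cbn [asem fval] in Hout2. mins L.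
    specialize (H pj Hq1 Hq2).
    rewrite (insv_ext h pj ar (fun i => rdv h a (INo i))) in H.
    2:{ intros i Hi. pose proof (Forall_map_seq _ _ _ Hin2 i Hi) as Ei. cbn [asem fval] in Ei. mins L. lia. }
    unfold outv in H. replace (Z.to_nat (rdv h pj (OUTo L))) with (Z.to_nat (rdv h a (AUXo L j))) in H by (f_equal; lia).
    exact H.
  -
    destruct (Hcl _ HD) as [Hf1 Hf2].
    destruct ar as [|a'].
    { specialize (Hs _ (or_introl eq_refl) a Hall Htag (Forall_nil _)). cbn [rsub rc] in Hs.
      apply Fcons in Hs. destruct Hs as [[] _]. }
    pose proof (Har _ Hf2) as Har2; simpl in Har2. simpl in Hf1.
    enough (Hind : forall n a, ALLc (WW L) nv h a -> h a = Some (tagZ (idx (KMain, RPrec f1 f2, S a') nds)) ->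
              Z.to_nat (rdv h a (INo 0)) = n -> reval (RPrec f1 f2) (insv h a (S a')) (outv h L a))
      by (apply (Hind _ a Hall Htag eq_refl)).
    clear a Hall Htag.
    intros n. induction n as [|n IHn]; intros a Hall Htag Hn.
    all: pose proof (Hs _ (or_introl eq_refl) a Hall Htag (Forall_nil _)) as Hloc;
         cbn [rsub rc] in Hloc; unfold nonneg in Hloc; apply Fapp in Hloc; destruct Hloc as [Hloc _];
         pose proof (Forall_map_seq _ _ _ Hloc 0%nat ltac:(lia)) as H0; cbn [asem fval] in H0; mins L.
    + assert (Hg : Forall (asem (WW L) (rdv h a) (rdv h a)) [AEqC (FX (INo 0)) 0]).
      { constructor; [|constructor]. cbn [asem fval]. mins L. lia. }
      pose proof (Hs _ (or_intror (or_introl eq_refl)) a Hall Htag Hg) as Hr.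
      cbn [rsub rc] in Hr. destruct Hr as (Hp1 & Hp2 & Hp3).
      set (p := a + rdv h a (Nat.min (PTRo L 0) (WW L - 1))) in *.
      apply Fapp in Hp3. destruct Hp3 as [Hin Hout]. apply Fcons in Hout. destruct Hout as [Hout _].
      cbn [asem fval] in Hout. mins L.
      pose proof (IHf1 a' Hf1 p Hp1 Hp2) as E.
      rewrite (insv_ext h p a' (fun i => rdv h a (INo (S i)))) in E.
      2:{ intros i Hi. pose proof (Forall_map_seq _ _ _ Hin i Hi) as Ei. cbn [asem fval] in Ei. mins L. lia. }
      rewrite insv_S. rewrite Hn. apply ev_prec0.
      replace (outv h L a) with (outv h L p) by (unfold outv; f_equal; lia). exact E.
    + assert (Hg : Forall (asem (WW L) (rdv h a) (rdv h a)) [AGe (FX (INo 0)) 1]).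
      { constructor; [|constructor]. cbn [asem fval]. mins L. lia. }
      pose proof (Hs _ (or_intror (or_intror (or_introl eq_refl))) a Hall Htag Hg) as Hr.
      cbn [rsub rc] in Hr. destruct Hr as (Hp1 & Hp2 & Hp3).
      set (p := a + rdv h a (Nat.min (PTRo L 0) (WW L - 1))) in *.
      apply Fcons in Hp3. destruct Hp3 as [Hi0 Hp3].
      apply Fapp in Hp3. destruct Hp3 as [Hin Hout]. apply Fcons in Hout. destruct Hout as [Hout _].
      cbn [asem fval] in Hout, Hi0. mins L.
      pose proof (Hs _ (or_intror (or_intror (or_intror (or_introl eq_refl)))) a Hall Htag Hg) as Hr.
      cbn [rsub rc] in Hr. destruct Hr as (Hq1 & Hq2 & Hq3).
      set (q := a + rdv h a (Nat.min (PTRo L 1) (WW L - 1))) in *.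
      apply Fcons in Hq3. destruct Hq3 as [Hj0 Hq3]. apply Fcons in Hq3. destruct Hq3 as [Hj1 Hq3].
      apply Fapp in Hq3. destruct Hq3 as [Hin2 Hout2]. apply Fcons in Hout2. destruct Hout2 as [Hout2 _].
      cbn [asem fval] in Hout2, Hj0, Hj1. mins L.
      pose proof (IHn p Hp1 Hp2 ltac:(lia)) as E1.
      pose proof (IHf2 (S (S a')) Hf2 q Hq1 Hq2) as E2.
      rewrite insv_S in E1 |- *. rewrite insv_SS in E2.
      rewrite Hn.
      rewrite (map_seq_ext (fun i => Z.to_nat (rdv h p (INo (S i)))) (fun i => Z.to_nat (rdv h a (INo (S i))))) in E1.
      2:{ intros i Hi. pose proof (Forall_map_seq _ _ _ Hin i Hi) as Ei. cbn [asem fval] in Ei. mins L. f_equal; lia. }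
      rewrite (map_seq_ext (fun i => Z.to_nat (rdv h q (INo (S (S i))))) (fun i => Z.to_nat (rdv h a (INo (S i))))) in E2.
      2:{ intros i Hi. pose proof (Forall_map_seq _ _ _ Hin2 i Hi) as Ei. cbn [asem fval] in Ei. mins L. f_equal; lia. }
      replace (Z.to_nat (rdv h p (INo 0))) with n in E1 by lia.
      replace (Z.to_nat (rdv h q (INo 0))) with n in E2 by lia.
      replace (Z.to_nat (rdv h q (INo 1))) with (outv h L p) in E2 by (unfold outv; f_equal; lia).
      replace (outv h L q) with (outv h L a) in E2 by (unfold outv; f_equal; lia).
      eapply ev_precS; eauto.
  -
    destruct (Hcl _ HD) as [Hf HC].
    pose proof (Har _ Hf) as Harf; simpl in Harf.
    pose proof (HR _ HC) as Hc; simpl in Hc.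
    assert (Hchain : forall c a, ALLc (WW L) nv h a -> h a = Some (tagZ (idx (KChain, f, ar) nds)) ->
              Z.to_nat (rdv h a (OUTo L)) = c ->
              forall k, (k < c)%nat -> exists r, reval f (k :: insv h a ar) (S r)).
    { clear a Hall Htag. intros c. induction c as [|c IHc]; intros a Hall Htag Hcv k Hk; [lia|].
      pose proof (Hc _ (or_introl eq_refl) a Hall Htag (Forall_nil _)) as Hloc.
      cbn [rsub rc] in Hloc. unfold nonneg in Hloc. apply Fapp in Hloc. destruct Hloc as [_ Hloc].
      apply Fcons in Hloc. destruct Hloc as [H0 _]. cbn [asem fval] in H0. mins L.
      assert (Hg : Forall (asem (WW L) (rdv h a) (rdv h a)) [AGe (FX (OUTo L)) 1]).
      { constructor; [|constructor]. cbn [asem fval]. mins L. lia. }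
      pose proof (Hc _ (or_intror (or_introl eq_refl)) a Hall Htag Hg) as Hr.
      cbn [rsub rc] in Hr. destruct Hr as (Hp1 & Hp2 & Hp3).
      set (p := a + rdv h a (Nat.min (PTRo L 0) (WW L - 1))) in *.
      apply Fcons in Hp3. destruct Hp3 as [Hi0 Hp3].
      apply Fapp in Hp3. destruct Hp3 as [Hin Hout]. apply Fcons in Hout. destruct Hout as [Hout _].
      cbn [asem fval] in Hout, Hi0. mins L.
      pose proof (Hc _ (or_intror (or_intror (or_introl eq_refl))) a Hall Htag Hg) as Hr.
      cbn [rsub rc] in Hr. destruct Hr as (Hq1 & Hq2 & Hq3).
      set (q := a + rdv h a (Nat.min (PTRo L 1) (WW L - 1))) in *.
      apply Fapp in Hq3. destruct Hq3 as [Hin2 Hout2]. apply Fcons in Hout2. destruct Hout2 as [Hout2 _].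
      cbn [asem fval] in Hout2. mins L.
      assert (Eq : insv h q ar = insv h a ar).
      { unfold insv. apply map_seq_ext. intros i Hi. pose proof (Forall_map_seq _ _ _ Hin2 i Hi) as Ei.
        cbn [asem fval] in Ei. mins L. f_equal; lia. }
      destruct (Nat.eq_dec k c) as [->|Hkc].
      + pose proof (IHf (S ar) Hf p Hp1 Hp2) as E. rewrite insv_S in E.
        rewrite (map_seq_ext (fun i => Z.to_nat (rdv h p (INo (S i)))) (fun i => Z.to_nat (rdv h a (INo i)))) in E.
        2:{ intros i Hi. pose proof (Forall_map_seq _ _ _ Hin i Hi) as Ei. cbn [asem fval] in Ei. mins L. f_equal; lia. }
        exists (Nat.pred (outv h L p)). replace (S (Nat.pred (outv h L p))) with (outv h L p) by (unfold outv; lia).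
        replace c with (Z.to_nat (rdv h p (INo 0))) by lia. exact E.
      + destruct (IHc q Hq1 Hq2 ltac:(lia) k ltac:(lia)) as [r Er]. exists r. rewrite <- Eq. exact Er. }
    pose proof (Hs _ (or_intror (or_introl eq_refl)) a Hall Htag (Forall_nil _)) as Hr.
    cbn [rsub rc] in Hr. destruct Hr as (Hp1 & Hp2 & Hp3).
    set (p := a + rdv h a (Nat.min (PTRo L 0) (WW L - 1))) in *.
    apply Fcons in Hp3. destruct Hp3 as [Hi0 Hp3].
    apply Fapp in Hp3. destruct Hp3 as [Hin Hout]. apply Fcons in Hout. destruct Hout as [Hout _].
    cbn [asem fval] in Hout, Hi0. mins L.
    pose proof (Hs _ (or_intror (or_intror (or_introl eq_refl))) a Hall Htag (Forall_nil _)) as Hr.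
    cbn [rsub rc] in Hr. destruct Hr as (Hq1 & Hq2 & Hq3).
    set (q := a + rdv h a (Nat.min (PTRo L 1) (WW L - 1))) in *.
    apply Fapp in Hq3. destruct Hq3 as [Hin2 Hout2]. apply Fcons in Hout2. destruct Hout2 as [Hout2 _].
    cbn [asem fval] in Hout2. mins L.
    assert (Eq : insv h q ar = insv h a ar).
    { unfold insv. apply map_seq_ext. intros i Hi. pose proof (Forall_map_seq _ _ _ Hin2 i Hi) as Ei.
      cbn [asem fval] in Ei. mins L. f_equal; lia. }
    pose proof (IHf (S ar) Hf p Hp1 Hp2) as E. rewrite insv_S in E.
    rewrite (map_seq_ext (fun i => Z.to_nat (rdv h p (INo (S i)))) (fun i => Z.to_nat (rdv h a (INo i)))) in E.
    2:{ intros i Hi. pose proof (Forall_map_seq _ _ _ Hin i Hi) as Ei. cbn [asem fval] in Ei. mins L. f_equal; lia. }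
    constructor.
    + replace (outv h L a) with (Z.to_nat (rdv h p (INo 0))) by (unfold outv; lia).
      assert (Eo : outv h L p = 0%nat) by (unfold outv; lia). rewrite Eo in E. exact E.
    + intros k Hk. rewrite <- Eq. apply (Hchain (outv h L a) q Hq1 Hq2); auto.
      unfold outv; f_equal; lia.
Qed.

Definition hL (H : list Z) : heap := fun a => if Z_lt_dec a 0 then None else nth_error H (Z.to_nat a).

Lemma rd_hL H a : rd (hL H) a = if Z_lt_dec a 0 then 0 else nth (Z.to_nat a) H 0.
Proof.
  unfold rd, hL. destruct (Z_lt_dec a 0); auto.
  destruct (nth_error H (Z.to_nat a)) eqn:E.
  - symmetry. apply nth_error_nth. auto.
  - apply nth_error_None in E. rewrite nth_overflow; auto.
Qed.

Lemma rdv_hL H n o : rdv (hL H) (Z.of_nat n) o = nth (n + o) H 0.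
Proof.
  unfold rdv. rewrite rd_hL. destruct (Z_lt_dec _ 0); [lia|]. f_equal. lia.
Qed.

Lemma hL_some H n : (n < length H)%nat -> hL H (Z.of_nat n) = Some (nth n H 0).
Proof.
  intros Hn. unfold hL. destruct (Z_lt_dec _ 0); [lia|]. rewrite Nat2Z.id.
  apply nth_error_nth'. auto.
Qed.

Lemma ALLc_hL W H a : (1 <= W)%nat ->
  ALLc W (-1) (hL H) a <-> (0 <= a /\ a + Z.of_nat W <= Z.of_nat (length H)).
Proof.
  intros HW. unfold ALLc, hL. split.
  - intros Ha. destruct (Ha 0%nat) as [_ E]; [lia|]. rewrite Z.add_0_r in E.
    destruct (Z_lt_dec a 0); [congruence|]. split; [lia|].
    destruct (Ha (W - 1)%nat) as [_ E2]; [lia|].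
    destruct (Z_lt_dec _ 0); [congruence|].
    apply nth_error_Some in E2. lia.
  - intros [H1 H2] o Ho. split; [lia|]. destruct (Z_lt_dec _ 0); [lia|].
    apply nth_error_Some. lia.
Qed.

Definition Valid (L : nat) (nds : list desc) (H : list Z) : Prop :=
  forall i, (i < length H)%nat -> nth i H 0 < 0 ->
    (i + WW L <= length H)%nat /\ exists D, In D nds /\ nth i H 0 = tagZ (idx D nds) /\
      forall x, In x (selfrules L nds D) -> RuleSemAt (WW L) (-1) (hL H) x (Z.of_nat i).

Lemma tagZ_inj a b : tagZ a = tagZ b -> a = b.
Proof. unfold tagZ. lia. Qed.

Lemma valid_global L nds H : Valid L nds H ->
  forall D, In D nds -> forall x, In x (selfrules L nds D) -> forall a, RuleSemAt (WW L) (-1) (hL H) x a.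
Proof.
  intros HV D HD x Hx a. pose proof Hx as Hx'. unfold RuleSemAt at 1. intros Hall Ht Hg.
  apply ALLc_hL in Hall; [|unfold WW; lia].
  assert (Ea : a = Z.of_nat (Z.to_nat a)) by lia.
  rewrite Ea in Ht. rewrite hL_some in Ht by (unfold WW in Hall; lia). injection Ht as Ht.
  destruct (HV (Z.to_nat a)) as [_ (D' & HD' & Et & Hr)]. unfold WW in Hall; lia.
  rewrite Ht. unfold tagZ; lia.
  rewrite Ht in Et. apply tagZ_inj in Et. rewrite (selfrules_tag _ _ _ _ Hx) in Et.
  apply idx_inj in Et; auto. subst D'.
  specialize (Hr x Hx). rewrite <- Ea in Hr. apply Hr; auto.
  apply ALLc_hL; [unfold WW; lia|]. auto. rewrite Ea, hL_some by (unfold WW in Hall; lia). congruence.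
Qed.

Lemma embed L r small big off i :
  (forall x, (x < length small)%nat -> nth (off + x) big 0 = nth x small 0) ->
  (off + length small <= length big)%nat -> (i + WW L <= length small)%nat ->
  RuleSemAt (WW L) (-1) (hL small) r (Z.of_nat i) -> RuleSemAt (WW L) (-1) (hL big) r (Z.of_nat (off + i)).
Proof.
  intros Hemb Hlen Hi Hs. unfold RuleSemAt in *. intros Hall Ht Hg.
  assert (HW : (1 <= WW L)%nat) by (unfold WW; lia).
  assert (Erd : forall o, (o < WW L)%nat -> rdv (hL big) (Z.of_nat (off + i)) o = rdv (hL small) (Z.of_nat i) o).
  { intros o Ho. rewrite !rdv_hL. replace (off + i + o)%nat with (off + (i + o))%nat by lia. apply Hemb. lia. }
  assert (Hall' : ALLc (WW L) (-1) (hL small) (Z.of_nat i)) by (apply ALLc_hL; auto; lia).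
  assert (Ht' : hL small (Z.of_nat i) = Some (tagZ (rtag r))).
  { rewrite hL_some by lia. rewrite hL_some in Ht by lia. rewrite <- Hemb by lia. auto. }
  assert (Hg' : Forall (asem (WW L) (rdv (hL small) (Z.of_nat i)) (rdv (hL small) (Z.of_nat i))) (rg r)).
  { revert Hg. apply Forall_asem_ext; auto; intros; first [apply Erd | symmetry; apply Erd]; auto. }
  specialize (Hs Hall' Ht' Hg').
  destruct (rsub r) as [[o k']|].
  - destruct Hs as (Hp1 & Hp2 & Hp3).
    set (ps := Z.of_nat i + rdv (hL small) (Z.of_nat i) (Nat.min o (WW L - 1))) in *.
    apply ALLc_hL in Hp1; auto.
    assert (Ep : Z.of_nat (off + i) + rdv (hL big) (Z.of_nat (off + i)) (Nat.min o (WW L - 1))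
                 = Z.of_nat (off + Z.to_nat ps)).
    { rewrite Erd by lia. fold ps. lia. }
    rewrite Ep. split; [|split].
    + apply ALLc_hL; auto. lia.
    + rewrite hL_some by lia. rewrite Hemb by lia. rewrite <- hL_some by lia.
      rewrite Z2Nat.id by lia. auto.
    + revert Hp3. apply Forall_asem_ext; auto; intros o' Ho'.
      all: first [apply Erd; auto | symmetry; apply Erd; auto | idtac].
      all: rewrite <- (Z2Nat.id ps) at 2 by lia; rewrite !rdv_hL;
        replace (off + Z.to_nat ps + o')%nat with (off + (Z.to_nat ps + o'))%nat by lia;
        apply Hemb; lia.
  - revert Hs. apply Forall_asem_ext; auto; intros; first [apply Erd | symmetry; apply Erd]; auto.
Qed.

Lemma valid_embed L nds small big off :
  (forall x, (x < length small)%nat -> nth (off + x) big 0 = nth x small 0) ->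
  (off + length small <= length big)%nat -> Valid L nds small ->
  forall i, (i < length small)%nat -> nth i small 0 < 0 ->
    (off + i + WW L <= length big)%nat /\ exists D, In D nds /\ nth (off + i) big 0 = tagZ (idx D nds) /\
      forall x, In x (selfrules L nds D) -> RuleSemAt (WW L) (-1) (hL big) x (Z.of_nat (off + i)).
Proof.
  intros Hemb Hlen HV i Hi Hn. destruct (HV i Hi Hn) as [Hw (D & HD & Et & Hr)].
  split; [lia|]. exists D. split; auto. split. rewrite Hemb; auto.
  intros x Hx. apply embed with (small := small); auto.
Qed.

Lemma valid_app L nds A B : Valid L nds A -> Valid L nds B -> Valid L nds (A ++ B).
Proof.
  intros HA HB i Hi Hn. rewrite length_app in Hi.
  destruct (Nat.lt_ge_cases i (length A)) as [HiA|HiA].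
  - rewrite app_nth1 in Hn by auto.
    destruct (valid_embed L nds A (A ++ B) 0 (fun x Hx => app_nth1 A B 0 Hx) ltac:(rewrite length_app; lia) HA i HiA Hn)
      as [H1 H2]. simpl in H1, H2. auto.
  - rewrite app_nth2 in Hn by auto.
    assert (Hemb : forall x, (x < length B)%nat -> nth (length A + x) (A ++ B) 0 = nth x B 0).
    { intros x Hx. rewrite app_nth2 by lia. f_equal. lia. }
    destruct (valid_embed L nds B (A ++ B) (length A) Hemb ltac:(rewrite length_app; lia) HB (i - length A) ltac:(lia) Hn)
      as [H1 H2]. replace (length A + (i - length A))%nat with i in * by lia. auto.
Qed.

Lemma valid_nil L nds : Valid L nds [].
Proof. intros i Hi. simpl in Hi. lia. Qed.

Lemma valid_concat L nds Hs : (forall H, In H Hs -> Valid L nds H) -> Valid L nds (concat Hs).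
Proof.
  induction Hs; simpl; intros HV. apply valid_nil. apply valid_app; auto.
Qed.

Definition padn (n : nat) (l : list nat) : list nat := firstn n (l ++ repeat 0%nat n).
Definition mkrec (L t : nat) (ins : list nat) (out : nat) (ptrs aux : list nat) : list Z :=
  tagZ t :: map Z.of_nat (padn L ins ++ [out] ++ padn (S L) ptrs ++ padn L aux).

Lemma length_padn n l : length (padn n l) = n.
Proof. unfold padn. rewrite length_firstn, length_app, repeat_length. lia. Qed.

Lemma nth_padn n l i : (i < n)%nat -> nth i (padn n l) 0%nat = nth i l 0%nat.
Proof.
  intros Hi. unfold padn. rewrite nth_firstn. destruct (Nat.ltb_spec i n); [|lia].
  destruct (Nat.lt_ge_cases i (length l)). rewrite app_nth1; auto.
  rewrite app_nth2 by auto. rewrite nth_repeat. rewrite nth_overflow; auto.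
Qed.

Lemma nth_map_Z l k : nth k (map Z.of_nat l) 0 = Z.of_nat (nth k l 0%nat).
Proof. revert k; induction l; intros [|k]; simpl; auto. Qed.

Lemma length_mkrec L t ins out ptrs aux : length (mkrec L t ins out ptrs aux) = WW L.
Proof. unfold mkrec, WW. cbn [length]. rewrite length_map, !length_app, !length_padn. cbn [length]. lia. Qed.

Lemma mk_tag L t ins out ptrs aux : nth 0 (mkrec L t ins out ptrs aux) 0 = tagZ t.
Proof. reflexivity. Qed.
Lemma mk_in L t ins out ptrs aux i : (i < L)%nat ->
  nth (INo i) (mkrec L t ins out ptrs aux) 0 = Z.of_nat (nth i ins 0%nat).
Proof.
  intros Hi. unfold mkrec, INo. simpl nth. rewrite nth_map_Z. rewrite app_nth1 by (rewrite length_padn; auto).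
  rewrite nth_padn; auto.
Qed.
Lemma mk_out L t ins out ptrs aux : nth (OUTo L) (mkrec L t ins out ptrs aux) 0 = Z.of_nat out.
Proof.
  unfold mkrec, OUTo. simpl nth. rewrite nth_map_Z. rewrite app_nth2 by (rewrite length_padn; auto).
  rewrite length_padn, Nat.sub_diag. reflexivity.
Qed.
Lemma mk_ptr L t ins out ptrs aux j : (j <= L)%nat ->
  nth (PTRo L j) (mkrec L t ins out ptrs aux) 0 = Z.of_nat (nth j ptrs 0%nat).
Proof.
  intros Hj. unfold mkrec, PTRo. replace (L + 2 + j)%nat with (S (L + S j))%nat by lia. simpl nth.
  rewrite nth_map_Z. rewrite app_nth2 by (rewrite length_padn; lia). rewrite length_padn.
  replace (L + S j - L)%nat with (S j) by lia.
  change (nth (S j) (out :: padn (S L) ptrs ++ padn L aux) 0%nat) with (nth j (padn (S L) ptrs ++ padn L aux) 0%nat).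
  rewrite app_nth1 by (rewrite length_padn; lia). rewrite nth_padn; auto. lia.
Qed.
Lemma mk_aux L t ins out ptrs aux j : (j < L)%nat ->
  nth (AUXo L j) (mkrec L t ins out ptrs aux) 0 = Z.of_nat (nth j aux 0%nat).
Proof.
  intros Hj. unfold mkrec, AUXo. replace (2 * L + 3 + j)%nat with (S (L + S (S L + j)))%nat by lia. simpl nth.
  rewrite nth_map_Z. rewrite app_nth2 by (rewrite length_padn; lia). rewrite length_padn.
  match goal with |- context [nth (?x - L)%nat _ _] => replace (x - L)%nat with (S (S (L + j))) by lia end.
  change (nth (S (S (L + j))) (out :: padn (S L) ptrs ++ padn L aux) 0%nat) with (nth (S (L + j)) (padn (S L) ptrs ++ padn L aux) 0%nat).
  rewrite app_nth2 by (rewrite length_padn; lia). rewrite length_padn.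
  replace (S (L + j) - S L)%nat with j by lia. rewrite nth_padn; auto.
Qed.
Lemma mk_nonneg L t ins out ptrs aux k : (0 < k)%nat -> 0 <= nth k (mkrec L t ins out ptrs aux) 0.
Proof.
  intros Hk. destruct k; [lia|]. unfold mkrec. simpl nth. rewrite nth_map_Z. lia.
Qed.

Lemma Z0_add x : Z.of_nat 0 + x = x.
Proof. reflexivity. Qed.

Lemma rdv_R R C o : (o < length R)%nat -> rdv (hL (R ++ C)) (Z.of_nat 0) o = nth o R 0.
Proof. intros Ho. rewrite rdv_hL. simpl. rewrite app_nth1; auto. Qed.

Lemma child_facts L big Hc ptr :
  (forall z, (z < length Hc)%nat -> nth (ptr + z) big 0 = nth z Hc 0) ->
  (ptr + length Hc <= length big)%nat -> (WW L <= length Hc)%nat ->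
  ALLc (WW L) (-1) (hL big) (Z.of_nat ptr) /\ hL big (Z.of_nat ptr) = Some (nth 0 Hc 0) /\
  forall o, (o < length Hc)%nat -> rdv (hL big) (Z.of_nat ptr) o = nth o Hc 0.
Proof.
  intros Hemb Hlen HW. split; [|split].
  - apply ALLc_hL. unfold WW; lia. lia.
  - rewrite hL_some by (unfold WW in HW; lia). rewrite <- Hemb by (unfold WW in HW; lia). f_equal. f_equal. lia.
  - intros o Ho. rewrite rdv_hL. apply Hemb; auto.
Qed.

Lemma valid_rec L nds D R C : length R = WW L -> nth 0 R 0 = tagZ (idx D nds) ->
  (forall k, (0 < k)%nat -> 0 <= nth k R 0) -> In D nds -> Valid L nds C ->
  (forall x, In x (selfrules L nds D) -> RuleSemAt (WW L) (-1) (hL (R ++ C)) x (Z.of_nat 0)) ->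
  Valid L nds (R ++ C).
Proof.
  intros HR Ht Hnn HD HC Hrules i Hi Hn. rewrite length_app in Hi.
  destruct (Nat.lt_ge_cases i (length R)) as [HiR|HiR].
  - rewrite app_nth1 in Hn by auto. destruct i.
    + split. rewrite length_app; lia. exists D. split; auto. split; auto. rewrite app_nth1 by lia. auto.
    + specialize (Hnn (S i) ltac:(lia)). lia.
  - rewrite app_nth2 in Hn by auto.
    assert (Hemb : forall x, (x < length C)%nat -> nth (length R + x) (R ++ C) 0 = nth x C 0).
    { intros x Hx. rewrite app_nth2 by lia. f_equal. lia. }
    destruct (valid_embed L nds C (R ++ C) (length R) Hemb ltac:(rewrite length_app; lia) HC (i - length R) ltac:(lia) Hn)
      as [H1 H2]. replace (length R + (i - length R))%nat with i in * by lia. auto.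
Qed.

Definition sumlen (l : list (list Z)) : nat := list_sum (map (@length Z) l).
Definition off (Hs : list (list Z)) (j : nat) : nat := sumlen (firstn j Hs).

Lemma nth_concat_off Hs : forall j z, (j < length Hs)%nat -> (z < length (nth j Hs []))%nat ->
  nth (off Hs j + z) (concat Hs) 0 = nth z (nth j Hs []) 0.
Proof.
  induction Hs as [|H0 Hs IH]; intros j z Hj Hz; simpl in *; [lia|].
  destruct j as [|j]; unfold off, sumlen in *; simpl in *.
  - rewrite app_nth1 by auto. auto.
  - rewrite app_nth2 by lia. rewrite <- IH by lia. f_equal. lia.
Qed.

Lemma off_len Hs : forall j, (j < length Hs)%nat -> (off Hs j + length (nth j Hs []) <= length (concat Hs))%nat.
Proof.
  induction Hs as [|H0 Hs IH]; intros j Hj; simpl in *; [lia|].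
  destruct j as [|j]; unfold off, sumlen in *; simpl in *; rewrite length_app. lia.
  specialize (IH j ltac:(lia)). lia.
Qed.

Definition ptrs_of (L : nat) (Hs : list (list Z)) : list nat :=
  map (fun j => (WW L + off Hs j)%nat) (seq 0 (length Hs)).
Lemma nth_ptrs L Hs j : (j < length Hs)%nat -> nth j (ptrs_of L Hs) 0%nat = (WW L + off Hs j)%nat.
Proof.
  intros Hj. unfold ptrs_of.
  rewrite nth_indep with (d' := (fun j => (WW L + off Hs j)%nat) 0%nat) by (rewrite length_map, length_seq; auto).
  rewrite (map_nth (fun j => (WW L + off Hs j)%nat) (seq 0 (length Hs)) 0%nat j).
  rewrite seq_nth by auto. auto.
Qed.

Lemma childJ L R Hs j : length R = WW L -> (j < length Hs)%nat -> (WW L <= length (nth j Hs []))%nat ->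
  ALLc (WW L) (-1) (hL (R ++ concat Hs)) (Z.of_nat (WW L + off Hs j)) /\
  hL (R ++ concat Hs) (Z.of_nat (WW L + off Hs j)) = Some (nth 0 (nth j Hs []) 0) /\
  forall o, (o < length (nth j Hs []))%nat ->
    rdv (hL (R ++ concat Hs)) (Z.of_nat (WW L + off Hs j)) o = nth o (nth j Hs []) 0.
Proof.
  intros HR Hj HW. apply child_facts; auto.
  - intros z Hz. rewrite app_nth2 by lia. rewrite HR. replace (WW L + off Hs j + z - WW L)%nat with (off Hs j + z)%nat by lia.
    apply nth_concat_off; auto.
  - rewrite length_app. pose proof (off_len Hs j Hj). lia.
Qed.

Definition Rep (L : nat) (nds : list desc) (H : list Z) (D : desc) (v : list nat) (y : nat) : Prop :=
  Valid L nds H /\ (WW L <= length H)%nat /\ nth 0 H 0 = tagZ (idx D nds) /\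
  (forall i, (i < length v)%nat -> nth (INo i) H 0 = Z.of_nat (nth i v 0%nat)) /\
  nth (OUTo L) H 0 = Z.of_nat y.

Lemma Fms {A} (P : A -> Prop) F n rest : (forall i, (i < n)%nat -> P (F i)) -> Forall P rest ->
  Forall P (map F (seq 0 n) ++ rest).
Proof.
  intros H1 H2. apply Forall_app. split; auto. apply Forall_map, Forall_forall.
  intros i Hi. apply in_seq in Hi. apply H1. lia.
Qed.

Lemma valid_concat_all L nds Hs : (forall j, (j < length Hs)%nat -> Valid L nds (nth j Hs [])) ->
  Valid L nds (concat Hs).
Proof.
  intros H. apply valid_concat. intros H0 Hin. destruct (In_nth _ _ [] Hin) as (j & Hj & <-). auto.
Qed.

Lemma build L nds D ins out aux Hs :
  In D nds -> (length ins < L)%nat -> (forall j, (j < length Hs)%nat -> Valid L nds (nth j Hs [])) ->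
  (forall x, In x (selfrules L nds D) ->
     RuleSemAt (WW L) (-1) (hL (mkrec L (idx D nds) ins out (ptrs_of L Hs) aux ++ concat Hs)) x (Z.of_nat 0)) ->
  Rep L nds (mkrec L (idx D nds) ins out (ptrs_of L Hs) aux ++ concat Hs) D ins out.
Proof.
  intros HD Hl HV Hr. split; [|split; [|split; [|split]]].
  - apply valid_rec with (D := D); auto. apply length_mkrec. intros; apply mk_nonneg; auto.
    apply valid_concat_all; auto.
  - rewrite length_app, length_mkrec. lia.
  - reflexivity.
  - intros i Hi. rewrite app_nth1 by (rewrite length_mkrec; unfold WW, INo; lia). apply mk_in. lia.
  - rewrite app_nth1 by (rewrite length_mkrec; unfold WW, OUTo; lia). apply mk_out.
Qed.

Lemma fin_choice {A} (d : A) (P : nat -> A -> Prop) : forall m, (forall j, (j < m)%nat -> exists x, P j x) ->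
  exists l, length l = m /\ forall j, (j < m)%nat -> P j (nth j l d).
Proof.
  induction m; intros H. exists []. split; auto. intros; lia.
  destruct IHm as (l & Hl & Hp). intros j Hj; apply H; lia.
  destruct (H m ltac:(lia)) as (x & Hx). exists (l ++ [x]). split. rewrite length_app; simpl; lia.
  intros j Hj. destruct (Nat.eq_dec j m) as [->|Hjm].
  - rewrite app_nth2 by lia. rewrite Hl, Nat.sub_diag. auto.
  - rewrite app_nth1 by lia. apply Hp. lia.
Qed.

Ltac offs := unfold WW, INo, OUTo, PTRo, AUXo in *; lia.
Ltac evp := repeat first [ rewrite rdv_R by (rewrite ?length_mkrec; offs)
                          | rewrite mk_in by offs | rewrite mk_out | rewrite mk_aux by offs
                          | rewrite mk_ptr by offs ].

Ltac evpin H := repeat first [ rewrite rdv_R in H by (rewrite ?length_mkrec; offs)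
                          | rewrite mk_in in H by offs | rewrite mk_out in H | rewrite mk_aux in H by offs
                          | rewrite mk_ptr in H by offs ].

Lemma complete L nds (Hcl : closedN nds) (Har : arOK L nds) :
  forall f v y, reval f v y -> In (KMain, f, length v) nds -> exists H, Rep L nds H (KMain, f, length v) v y.
Proof.
  apply (reval_ind2 (fun f v y => In (KMain, f, length v) nds -> exists H, Rep L nds H (KMain, f, length v) v y)
    (fun gs v ws => (forall g, In g gs -> In (KMain, g, length v) nds) -> (length ws = length gs)%nat /\
        forall j, (j < length gs)%nat -> exists H, Rep L nds H (KMain, nth j gs RZero, length v) v (nth j ws 0%nat))).
  -
    intros v HD. pose proof (Har _ HD) as HarD; simpl in HarD.
    exists (mkrec L (idx (KMain, RZero, length v) nds) v 0 (ptrs_of L []) [] ++ concat []).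
    apply build; auto. intros j Hj; simpl in Hj; lia.
    intros x Hx. simpl in Hx. destruct Hx as [<-|[]].
    unfold RuleSemAt. intros _ _ _. cbn [rsub rc]. unfold nonneg.
    rewrite <- app_assoc. apply Fms.
    + intros i Hi. cbn [asem fval]. mins L. evp. lia.
    + repeat constructor; cbn [asem fval]; mins L; evp; lia.
  -
    intros x v HD. pose proof (Har _ HD) as HarD; simpl in HarD.
    exists (mkrec L (idx (KMain, RSucc, length (x :: v)) nds) (x :: v) (S x) (ptrs_of L []) [] ++ concat []).
    apply build; auto. intros j Hj; simpl in Hj; lia.
    intros r Hx. cbn [selfrules length In] in Hx. destruct Hx as [<-|[]].
    unfold RuleSemAt. intros _ _ _. cbn [rsub rc]. unfold nonneg.
    rewrite <- app_assoc. apply Fms.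
    + intros i Hi. cbn [asem fval]. mins L. evp. lia.
    + repeat constructor; cbn [asem fval]; mins L; evp; simpl; lia.
  -
    intros i v Hi HD. pose proof (Har _ HD) as HarD; simpl in HarD.
    exists (mkrec L (idx (KMain, RProj i, length v) nds) v (nth i v 0%nat) (ptrs_of L []) [] ++ concat []).
    apply build; auto. intros j Hj; simpl in Hj; lia.
    intros r Hx. cbn [selfrules length In] in Hx. destruct (Nat.ltb_spec i (length v)); [|lia].
    destruct Hx as [<-|[]].
    unfold RuleSemAt. intros _ _ _. cbn [rsub rc]. unfold nonneg.
    rewrite <- app_assoc. apply Fms.
    + intros i' Hi'. cbn [asem fval]. mins L. evp. lia.
    + repeat constructor; cbn [asem fval]; mins L; evp; simpl; lia.
  -
    intros f gs v ws y _ IHs _ IHf HD.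
    destruct (Hcl _ HD) as [Hf Hgs]. pose proof (Har _ HD) as HarD; simpl in HarD.
    pose proof (Har _ Hf) as Harf; simpl in Harf.
    destruct (IHs Hgs) as [Hlw Hj]. rewrite Hlw in IHf. destruct (IHf Hf) as [Hfr Rf].
    destruct (fin_choice [] (fun j H => Rep L nds H (KMain, nth j gs RZero, length v) v (nth j ws 0%nat)) _ Hj)
      as (Hl & Hll & Rl).
    set (Hs := Hl ++ [Hfr]).
    assert (HsL : length Hs = S (length gs)) by (unfold Hs; rewrite length_app; simpl; lia).
    assert (Hsj : forall j, (j < (length gs))%nat -> nth j Hs [] = nth j Hl []) by (intros; unfold Hs; apply app_nth1; lia).
    assert (Hsm : nth (length gs) Hs [] = Hfr) by (unfold Hs; rewrite app_nth2 by lia; rewrite Hll, Nat.sub_diag; auto).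
    exists (mkrec L (idx (KMain, RComp f gs, length v) nds) v y (ptrs_of L Hs) ws ++ concat Hs).
    apply build; auto.
    { intros j Hj'. rewrite HsL in Hj'. destruct (Nat.eq_dec j (length gs)) as [->|Hjm].
      - rewrite Hsm. apply Rf. - rewrite Hsj by lia. apply Rl. lia. }
    intros r Hx. cbn [selfrules In] in Hx. destruct Hx as [<-|[<-|Hx]].
    + unfold RuleSemAt. intros _ _ _. cbn [rsub rc]. unfold nonneg. apply Fms.
      * intros i' Hi'. cbn [asem fval]. mins L. evp. lia.
      * repeat constructor; cbn [asem fval]; mins L; evp; lia.
    + unfold RuleSemAt. intros _ _ _. cbn [rsub rc].
      rewrite (mn L (PTRo L (length gs))) by offs. evp. rewrite nth_ptrs by lia. rewrite Z0_add.
      destruct Rf as (_ & RW & Rt & Ri & Ro).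
      destruct (childJ L (mkrec L (idx (KMain, RComp f gs, length v) nds) v y (ptrs_of L Hs) ws) Hs (length gs)
                  (length_mkrec _ _ _ _ _ _) ltac:(lia) ltac:(rewrite Hsm; auto)) as (C1 & C2 & C3).
      rewrite Hsm in C2, C3.
      split; [exact C1|]. split; [rewrite C2, Rt; auto|].
      apply Fms.
      * intros i Hi. cbn [asem fval]. mins L. evp. rewrite C3 by offs. rewrite Ri by lia. lia.
      * repeat constructor; cbn [asem fval]; mins L; evp. rewrite C3 by offs. rewrite Ro. lia.
    + apply in_map_iff in Hx. destruct Hx as (j & <- & Hj'). apply in_seq in Hj'.
      unfold RuleSemAt. intros _ _ _. cbn [rsub rc].
      rewrite (mn L (PTRo L j)) by offs. evp. rewrite nth_ptrs by lia. rewrite Z0_add.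
      destruct (Rl j ltac:(lia)) as (_ & RW & Rt & Ri & Ro).
      destruct (childJ L (mkrec L (idx (KMain, RComp f gs, length v) nds) v y (ptrs_of L Hs) ws) Hs j
                  (length_mkrec _ _ _ _ _ _) ltac:(lia) ltac:(rewrite Hsj by lia; auto)) as (C1 & C2 & C3).
      rewrite Hsj in C2, C3 by lia.
      split; [exact C1|]. split; [rewrite C2, Rt; auto|].
      apply Fms.
      * intros i Hi. cbn [asem fval]. mins L. evp. rewrite C3 by offs. rewrite Ri by lia. lia.
      * repeat constructor; cbn [asem fval]; mins L; evp. rewrite C3 by offs. rewrite Ro. lia.
  -
    intros f g v y _ IHf HD.
    destruct (Hcl _ HD) as [Hf Hg2]. pose proof (Har _ HD) as HarD; simpl in HarD.
    pose proof (Har _ Hg2) as Harg; simpl in Harg. simpl in Hf.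
    destruct (IHf Hf) as [Hfr Rf].
    exists (mkrec L (idx (KMain, RPrec f g, length (0%nat :: v)) nds) (0%nat :: v) y (ptrs_of L [Hfr]) [0%nat] ++ concat [Hfr]).
    apply build; auto.
    { intros j Hj'. simpl in Hj'. destruct j; [|lia]. apply Rf. }
    destruct Rf as (_ & RW & Rt & Ri & Ro).
    intros r Hx. cbn [selfrules length In] in Hx. destruct Hx as [<-|[<-|[<-|[<-|[]]]]].
    + unfold RuleSemAt. intros _ _ _. cbn [rsub rc]. unfold nonneg. apply Fms.
      * intros i' Hi'. cbn [asem fval]. mins L. evp. lia.
      * repeat constructor; cbn [asem fval]; mins L; evp; lia.
    + unfold RuleSemAt. intros _ _ _. cbn [rsub rc].
      rewrite (mn L (PTRo L 0)) by offs. evp. rewrite nth_ptrs by (simpl; lia). rewrite Z0_add.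
      destruct (childJ L (mkrec L (idx (KMain, RPrec f g, length (0%nat :: v)) nds) (0%nat :: v) y (ptrs_of L [Hfr]) [0%nat]) [Hfr] 0
                  (length_mkrec _ _ _ _ _ _) ltac:(simpl; lia) ltac:(simpl; auto)) as (C1 & C2 & C3).
      simpl nth in C2, C3.
      split; [exact C1|]. split; [rewrite C2, Rt; auto|].
      apply Fms.
      * intros i Hi. cbn [asem fval]. mins L. evp. rewrite C3 by offs. rewrite Ri by lia. simpl. lia.
      * repeat constructor; cbn [asem fval]; mins L; evp. rewrite C3 by offs. rewrite Ro. lia.
    + unfold RuleSemAt. intros _ _ Hg. inversion Hg as [|? ? Hg0 _]. cbn [asem fval] in Hg0. mins L. evpin Hg0.
      simpl in Hg0. lia.
    + unfold RuleSemAt. intros _ _ Hg. inversion Hg as [|? ? Hg0 _]. cbn [asem fval] in Hg0. mins L. evpin Hg0.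
      simpl in Hg0. lia.
  -
    intros f g n v r y _ IH1 _ IH2 HD.
    destruct (Hcl _ HD) as [Hf Hg2]. pose proof (Har _ HD) as HarD; simpl in HarD.
    pose proof (Har _ Hg2) as Harg; simpl in Harg.
    destruct (IH1 HD) as [H1 R1]. destruct (IH2 Hg2) as [H2 R2].
    set (Hs := [H1; H2]).
    exists (mkrec L (idx (KMain, RPrec f g, length (S n :: v)) nds) (S n :: v) y (ptrs_of L Hs) [r] ++ concat Hs).
    apply build; auto.
    { intros j Hj'. simpl in Hj'. destruct j as [|[|]]; [apply R1|apply R2|lia]. }
    destruct R1 as (_ & RW1 & Rt1 & Ri1 & Ro1). destruct R2 as (_ & RW2 & Rt2 & Ri2 & Ro2).
    intros x Hx. cbn [selfrules length In] in Hx. destruct Hx as [<-|[<-|[<-|[<-|[]]]]].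
    + unfold RuleSemAt. intros _ _ _. cbn [rsub rc]. unfold nonneg. apply Fms.
      * intros i' Hi'. cbn [asem fval]. mins L. evp. lia.
      * repeat constructor; cbn [asem fval]; mins L; evp; lia.
    + unfold RuleSemAt. intros _ _ Hg. inversion Hg as [|? ? Hg0 _]. cbn [asem fval] in Hg0. mins L. evpin Hg0.
      simpl in Hg0. lia.
    + unfold RuleSemAt. intros _ _ _. cbn [rsub rc].
      rewrite (mn L (PTRo L 0)) by offs. evp. rewrite nth_ptrs by (simpl; lia). rewrite Z0_add.
      destruct (childJ L (mkrec L (idx (KMain, RPrec f g, length (S n :: v)) nds) (S n :: v) y (ptrs_of L Hs) [r]) Hs 0
                  (length_mkrec _ _ _ _ _ _) ltac:(simpl; lia) ltac:(simpl; auto)) as (C1 & C2 & C3).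
      simpl nth in C2, C3.
      split; [exact C1|]. split; [rewrite C2, Rt1; auto|].
      constructor.
      { cbn [asem fval]. mins L. evp. rewrite C3 by offs. rewrite Ri1 by (simpl; lia). simpl. lia. }
      apply Fms.
      * intros i Hi. cbn [asem fval]. mins L. evp. rewrite C3 by offs. rewrite Ri1 by (simpl; lia). simpl. lia.
      * repeat constructor; cbn [asem fval]; mins L; evp. rewrite C3 by offs. rewrite Ro1. simpl. lia.
    + unfold RuleSemAt. intros _ _ _. cbn [rsub rc].
      rewrite (mn L (PTRo L 1)) by offs. evp. rewrite nth_ptrs by (simpl; lia). rewrite Z0_add.
      destruct (childJ L (mkrec L (idx (KMain, RPrec f g, length (S n :: v)) nds) (S n :: v) y (ptrs_of L Hs) [r]) Hs 1
                  (length_mkrec _ _ _ _ _ _) ltac:(simpl; lia) ltac:(simpl; auto)) as (C1 & C2 & C3).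
      simpl nth in C2, C3.
      split; [exact C1|]. split; [rewrite C2, Rt2; auto|].
      constructor.
      { cbn [asem fval]. mins L. evp. rewrite C3 by offs. rewrite Ri2 by (simpl; lia). simpl. lia. }
      constructor.
      { cbn [asem fval]. mins L. evp. rewrite C3 by offs. rewrite Ri2 by (simpl; lia). simpl. lia. }
      apply Fms.
      * intros i Hi. cbn [asem fval]. mins L. evp. rewrite C3 by offs. rewrite Ri2 by (simpl; lia). simpl. lia.
      * repeat constructor; cbn [asem fval]; mins L; evp. rewrite C3 by offs. rewrite Ro2. simpl. lia.
  -
    intros f v n _ IH0 Hall HD.
    destruct (Hcl _ HD) as [Hf HC]. pose proof (Har _ HD) as HarD; simpl in HarD.
    pose proof (Har _ Hf) as Harf; simpl in Harf.
    assert (Hchain : forall c, (c <= n)%nat -> exists Hc, Rep L nds Hc (KChain, f, length v) v c).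
    { intros c. induction c as [|c IHc]; intros Hc.
      - exists (mkrec L (idx (KChain, f, length v) nds) v 0 (ptrs_of L []) [] ++ concat []).
        apply build; auto. intros j Hj; simpl in Hj; lia.
        intros x Hx. cbn [selfrules In] in Hx. destruct Hx as [<-|[<-|[<-|[]]]].
        + unfold RuleSemAt. intros _ _ _. cbn [rsub rc]. unfold nonneg. apply Fms.
          * intros i' Hi'. cbn [asem fval]. mins L. evp. lia.
          * repeat constructor; cbn [asem fval]; mins L; evp; lia.
        + unfold RuleSemAt. intros _ _ Hg. inversion Hg as [|? ? Hg0 _]. cbn [asem fval] in Hg0. mins L. evpin Hg0.
          simpl in Hg0. lia.
        + unfold RuleSemAt. intros _ _ Hg. inversion Hg as [|? ? Hg0 _]. cbn [asem fval] in Hg0. mins L. evpin Hg0.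
          simpl in Hg0. lia.
      - destruct (IHc ltac:(lia)) as [Hch Rch].
        destruct (Hall c ltac:(lia)) as (r & _ & IHr). destruct (IHr Hf) as [Hfr Rf].
        set (Hs := [Hfr; Hch]).
        exists (mkrec L (idx (KChain, f, length v) nds) v (S c) (ptrs_of L Hs) [] ++ concat Hs).
        apply build; auto.
        { intros j Hj'. simpl in Hj'. destruct j as [|[|]]; [apply Rf|apply Rch|lia]. }
        destruct Rf as (_ & RW1 & Rt1 & Ri1 & Ro1). destruct Rch as (_ & RW2 & Rt2 & Ri2 & Ro2).
        intros x Hx. cbn [selfrules In] in Hx. destruct Hx as [<-|[<-|[<-|[]]]].
        + unfold RuleSemAt. intros _ _ _. cbn [rsub rc]. unfold nonneg. apply Fms.
          * intros i' Hi'. cbn [asem fval]. mins L. evp. lia.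
          * repeat constructor; cbn [asem fval]; mins L; evp; lia.
        + unfold RuleSemAt. intros _ _ _. cbn [rsub rc].
          rewrite (mn L (PTRo L 0)) by offs. evp. rewrite nth_ptrs by (simpl; lia). rewrite Z0_add.
          destruct (childJ L (mkrec L (idx (KChain, f, length v) nds) v (S c) (ptrs_of L Hs) []) Hs 0
                      (length_mkrec _ _ _ _ _ _) ltac:(simpl; lia) ltac:(simpl; auto)) as (C1 & C2 & C3).
          simpl nth in C2, C3.
          split; [exact C1|]. split; [rewrite C2, Rt1; auto|].
          constructor.
          { cbn [asem fval]. mins L. evp. rewrite C3 by offs. rewrite Ri1 by (simpl; lia). simpl. lia. }
          apply Fms.
          * intros i Hi. cbn [asem fval]. mins L. evp. rewrite C3 by offs. rewrite Ri1 by (simpl; lia). simpl. lia.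
          * repeat constructor; cbn [asem fval]; mins L; evp. rewrite C3 by offs. rewrite Ro1. simpl. lia.
        + unfold RuleSemAt. intros _ _ _. cbn [rsub rc].
          rewrite (mn L (PTRo L 1)) by offs. evp. rewrite nth_ptrs by (simpl; lia). rewrite Z0_add.
          destruct (childJ L (mkrec L (idx (KChain, f, length v) nds) v (S c) (ptrs_of L Hs) []) Hs 1
                      (length_mkrec _ _ _ _ _ _) ltac:(simpl; lia) ltac:(simpl; auto)) as (C1 & C2 & C3).
          simpl nth in C2, C3.
          split; [exact C1|]. split; [rewrite C2, Rt2; auto|].
          apply Fms.
          * intros i Hi. cbn [asem fval]. mins L. evp. rewrite C3 by offs. rewrite Ri2 by (simpl; lia). simpl. lia.
          * repeat constructor; cbn [asem fval]; mins L; evp. rewrite C3 by offs. rewrite Ro2. simpl. lia. }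
    destruct (Hchain n ltac:(lia)) as [Hch Rch].
    destruct (IH0 Hf) as [Hfr Rf].
    set (Hs := [Hfr; Hch]).
    exists (mkrec L (idx (KMain, RMu f, length v) nds) v n (ptrs_of L Hs) [] ++ concat Hs).
    apply build; auto.
    { intros j Hj'. simpl in Hj'. destruct j as [|[|]]; [apply Rf|apply Rch|lia]. }
    destruct Rf as (_ & RW1 & Rt1 & Ri1 & Ro1). destruct Rch as (_ & RW2 & Rt2 & Ri2 & Ro2).
    intros x Hx. cbn [selfrules In] in Hx. destruct Hx as [<-|[<-|[<-|[]]]].
    + unfold RuleSemAt. intros _ _ _. cbn [rsub rc]. unfold nonneg. apply Fms.
      * intros i' Hi'. cbn [asem fval]. mins L. evp. lia.
      * repeat constructor; cbn [asem fval]; mins L; evp; lia.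
    + unfold RuleSemAt. intros _ _ _. cbn [rsub rc].
      rewrite (mn L (PTRo L 0)) by offs. evp. rewrite nth_ptrs by (simpl; lia). rewrite Z0_add.
      destruct (childJ L (mkrec L (idx (KMain, RMu f, length v) nds) v n (ptrs_of L Hs) []) Hs 0
                  (length_mkrec _ _ _ _ _ _) ltac:(simpl; lia) ltac:(simpl; auto)) as (C1 & C2 & C3).
      simpl nth in C2, C3.
      split; [exact C1|]. split; [rewrite C2, Rt1; auto|].
      constructor.
      { cbn [asem fval]. mins L. evp. rewrite C3 by offs. rewrite Ri1 by (simpl; lia). simpl. lia. }
      apply Fms.
      * intros i Hi. cbn [asem fval]. mins L. evp. rewrite C3 by offs. rewrite Ri1 by (simpl; lia). simpl. lia.
      * repeat constructor; cbn [asem fval]; mins L; evp. rewrite C3 by offs. rewrite Ro1. simpl. lia.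
    + unfold RuleSemAt. intros _ _ _. cbn [rsub rc].
      rewrite (mn L (PTRo L 1)) by offs. evp. rewrite nth_ptrs by (simpl; lia). rewrite Z0_add.
      destruct (childJ L (mkrec L (idx (KMain, RMu f, length v) nds) v n (ptrs_of L Hs) []) Hs 1
                  (length_mkrec _ _ _ _ _ _) ltac:(simpl; lia) ltac:(simpl; auto)) as (C1 & C2 & C3).
      simpl nth in C2, C3.
      split; [exact C1|]. split; [rewrite C2, Rt2; auto|].
      apply Fms.
      * intros i Hi. cbn [asem fval]. mins L. evp. rewrite C3 by offs. rewrite Ri2 by (simpl; lia). simpl. lia.
      * repeat constructor; cbn [asem fval]; mins L; evp. rewrite C3 by offs. rewrite Ro2. simpl. lia.
  - intros v _. split; auto. intros j Hj; simpl in Hj; lia.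
  - intros g gs v w ws _ IHg _ IHgs Hin.
    destruct (IHg (Hin g (or_introl eq_refl))) as [Hg Rg].
    destruct (IHgs (fun g' H => Hin g' (or_intror H))) as [Hl Hj].
    split. simpl; lia.
    intros [|j] Hj'. exists Hg. exact Rg. apply Hj. simpl in Hj'. lia.
Qed.

Definition desc_sub (D : desc) : list desc :=
  match D with (KMain, g, a) => subtree g a | (KChain, g, a) => subtree g (S a) end.

Lemma sub_incl : forall f ar D, In D (subtree f ar) -> incl (desc_sub D) (subtree f ar).
Proof.
  induction f using recf_ind2; intros ar D HD; simpl in HD.
  - destruct HD as [<-|[]]. simpl. apply incl_refl.
  - destruct HD as [<-|[]]. simpl. apply incl_refl.
  - destruct HD as [<-|[]]. simpl. apply incl_refl.
  - destruct HD as [<-|HD]. simpl. apply incl_refl.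
    apply in_app_iff in HD. destruct HD as [HD|HD].
    + eapply incl_tran. apply IHf; eauto. intros x Hx. simpl. right. apply in_app_iff. left; auto.
    + apply in_flat_map in HD. destruct HD as (g' & Hg' & HD). rewrite Forall_forall in H.
      eapply incl_tran. apply (H g' Hg' ar); eauto. intros x Hx. simpl. right. apply in_app_iff. right.
      apply in_flat_map. eauto.
  - destruct HD as [<-|HD]. simpl. apply incl_refl.
    apply in_app_iff in HD. destruct HD as [HD|HD].
    + eapply incl_tran. apply IHf1; eauto. intros x Hx. simpl. right. apply in_app_iff. left; auto.
    + eapply incl_tran. apply IHf2; eauto. intros x Hx. simpl. right. apply in_app_iff. right; auto.
  - destruct HD as [<-|[<-|HD]]. simpl. apply incl_refl.
    simpl. intros x Hx. simpl. right. right. auto.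
    eapply incl_tran. apply IHf; eauto. intros x Hx. simpl. right. right. auto.
Qed.

Lemma subtree_head f ar : In (KMain, f, ar) (subtree f ar).
Proof. destruct f; left; auto. Qed.

Lemma closed_subtree f ar : closedN (subtree f ar).
Proof.
  intros D HD. pose proof (sub_incl f ar D HD) as Hi.
  destruct D as [[k g] a]. destruct k.
  - destruct g; simpl in Hi; auto.
    + split. apply Hi. right. apply in_app_iff. left. apply subtree_head.
      intros g' Hg'. apply Hi. right. apply in_app_iff. right. apply in_flat_map. exists g'. split; auto. apply subtree_head.
    + split; apply Hi; right; apply in_app_iff; [left|right]; apply subtree_head.
    + split; apply Hi. right. right. apply subtree_head. right. left. auto.
  - simpl in Hi. apply Hi. apply subtree_head.
Qed.

Definition bnd (B : nat) (f : recf) (ar : nat) : Prop := forall D, In D (subtree f ar) -> (snd D <= B)%nat.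

Lemma bnd_atom B f ar : (ar <= B)%nat -> (match f with RZero | RSucc | RProj _ => True | _ => False end) -> bnd B f ar.
Proof. intros Ha Hf D HD. destruct f; try contradiction; simpl in HD; destruct HD as [<-|[]]; simpl; auto. Qed.

Lemma bnd_comp B g gs ar : (ar <= B)%nat -> bnd B g (length gs) -> (forall g', In g' gs -> bnd B g' ar) ->
  bnd B (RComp g gs) ar.
Proof.
  intros Ha Hg Hgs D HD. simpl in HD. destruct HD as [<-|HD]; [simpl; auto|].
  apply in_app_iff in HD. destruct HD as [HD|HD]. apply Hg; auto.
  apply in_flat_map in HD. destruct HD as (g' & Hg' & HD). eapply Hgs; eauto.
Qed.

Lemma bnd_prec B g1 g2 ar : (ar <= B)%nat -> bnd B g1 (pred ar) -> bnd B g2 (S ar) -> bnd B (RPrec g1 g2) ar.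
Proof.
  intros Ha H1 H2 D HD. simpl in HD. destruct HD as [<-|HD]; [simpl; auto|].
  apply in_app_iff in HD. destruct HD as [HD|HD]; auto.
Qed.

Lemma bnd_const B c ar : (ar <= B)%nat -> (1 <= B)%nat -> bnd B (const c) ar.
Proof.
  intros Ha HB. induction c; simpl. apply bnd_atom; auto.
  apply bnd_comp; auto. apply bnd_atom; simpl; auto. intros g' [<-|[]]. auto.
Qed.

Ltac bt := first
  [ apply bnd_const; simpl; lia
  | apply bnd_atom; [simpl; lia | exact I]
  | apply bnd_comp; [simpl; lia | bt | let g := fresh "g" in let Hin := fresh "Hin" in
      intros g Hin; simpl in Hin; repeat (destruct Hin as [<-|Hin]; [bt|]); destruct Hin ]
  | apply bnd_prec; [simpl; lia | bt | bt] ].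

Lemma bnd_K M N : bnd 3 (Kp M N) 1.
Proof.
  unfold Kp, cp, Eprog, cnp, cpp, trip, addp. bt.
Qed.

Lemma qf_ANDl l : Forall qfree l -> qfree (ANDl l).
Proof. induction l; simpl; auto. intros H; inversion H; auto. Qed.
Lemma vb_ANDl k l : Forall (vars_below k) l -> vars_below k (ANDl l).
Proof. induction l; simpl; auto. intros H; inversion H; auto. Qed.
Lemma tvb_num k n : term_vars_below k (num n).
Proof. induction n; simpl; auto. Qed.

Lemma qf_tr W zb a : qfree (tr_atom W zb a).
Proof. destruct a; simpl; auto. Qed.
Lemma vb_tr W zb a : (1 <= W)%nat -> (zb + W <= 3 + W + W)%nat -> vars_below (3 + W + W) (tr_atom W zb a).
Proof.
  intros HW Hz. assert (Hr : forall r, term_vars_below (3 + W + W) (tr_fref W zb r)).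
  { destruct r; simpl; lia. }
  destruct a; simpl; repeat split; auto using tvb_num.
Qed.

Lemma qf_READS W b s : qfree (READS W b s).
Proof. unfold READS. apply qf_ANDl. apply Forall_map, Forall_forall. intros; simpl; auto. Qed.
Lemma vb_READS W b s : term_vars_below (3 + W + W) b -> (s + W <= 3 + W + W)%nat ->
  vars_below (3 + W + W) (READS W b s).
Proof.
  intros Hb Hs. unfold READS. apply vb_ANDl. apply Forall_map, Forall_forall. intros o Ho. apply in_seq in Ho.
  simpl. repeat split; auto using tvb_num. lia.
Qed.
Lemma qf_ALLOCS W b : qfree (ALLOCS W b).
Proof. unfold ALLOCS. apply qf_ANDl. apply Forall_map, Forall_forall. intros; simpl; auto. Qed.
Lemma vb_ALLOCS W b : term_vars_below (3 + W + W) b -> vars_below (3 + W + W) (ALLOCS W b).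
Proof.
  intros Hb. unfold ALLOCS. apply vb_ANDl. apply Forall_map, Forall_forall. intros o Ho.
  simpl. repeat split; auto using tvb_num.
Qed.

Ltac vbs := repeat (match goal with |- _ /\ _ => split end);
  first [ lia | apply tvb_num | exact I
        | apply vb_READS; simpl; lia | apply vb_ALLOCS; simpl; lia
        | apply qf_READS | apply qf_ALLOCS
        | (apply vb_ANDl; apply Forall_map, Forall_forall; intros; apply vb_tr; lia)
        | (apply qf_ANDl; apply Forall_map, Forall_forall; intros; apply qf_tr) ].

Lemma qf_rule W r : qfree (rule_form W r).
Proof.
  unfold rule_form. destruct (rsub r) as [[o k]|]; cbn -[READS ALLOCS tr_atom num]; vbs.
Qed.
Lemma vb_rule W r : (1 <= W)%nat -> vars_below (3 + W + W) (rule_form W r).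
Proof.
  intros HW. unfold rule_form. destruct (rsub r) as [[o k]|]; cbn -[READS ALLOCS tr_atom num]; vbs.
Qed.

Lemma qf_matrix W L k Rs : qfree (matrix W L k Rs).
Proof.
  unfold matrix, root_form. apply qf_ANDl. constructor.
  - cbn -[READS ALLOCS tr_atom num]. vbs.
  - apply Forall_map, Forall_forall. intros; apply qf_rule.
Qed.
Lemma vb_matrix W L k Rs : (L + 3 <= W)%nat -> vars_below (3 + W + W) (matrix W L k Rs).
Proof.
  intros HW. unfold matrix, root_form. apply vb_ANDl. constructor.
  - unfold INo, OUTo. cbn -[READS ALLOCS tr_atom num]. vbs.
  - apply Forall_map, Forall_forall. intros; apply vb_rule; lia.
Qed.

Lemma finite_hL H : finite_heap (hL H).
Proof.
  exists (map Z.of_nat (seq 0 (length H))). intros x Hx. unfold hL in Hx.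
  destruct (Z_lt_dec x 0); [congruence|]. apply in_map_iff. exists (Z.to_nat x). split; [lia|].
  apply in_seq. apply nth_error_Some in Hx. lia.
Qed.

Lemma list_max_le' l x : In x l -> (x <= list_max l)%nat.
Proof.
  intros H. pose proof (list_max_le l (list_max l)) as [H1 _].
  specialize (H1 (Nat.le_refl _)). rewrite Forall_forall in H1. auto.
Qed.

Definition Ld (d : recf) : nat := (5 + list_max (map snd (subtree d 1)))%nat.
Definition Wd (d : recf) : nat := WW (Ld d).
Definition Nq (d : recf) : nat := (1 + Wd d + Wd d)%nat.
Definition Qd (d : recf) : recf := RComp d [Kp 2 (Nq d)].
Definition nodes (d : recf) : list desc := subtree (Qd d) 1.
Definition Rsd (d : recf) : list rule := flat_map (selfrules (Ld d) (nodes d)) (nodes d).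
Definition kroot (d : recf) : nat := idx (KMain, Qd d, 1%nat) (nodes d).
Definition Bd (d : recf) : form := matrix (Wd d) (Ld d) (kroot d) (Rsd d).
Definition bd (d : recf) : nat := code_form (Bd d).
Definition phid (d : recf) : form := FAnd (EQ (TVar 0) (num (bd d))) (Bd d).

Lemma arOK_nodes d : arOK (Ld d) (nodes d).
Proof.
  intros D HD. unfold nodes, Qd in HD. simpl in HD. unfold Ld.
  destruct HD as [<-|HD]; [simpl; lia|].
  rewrite app_nil_r in HD. apply in_app_iff in HD. destruct HD as [HD|HD].
  - pose proof (list_max_le' (map snd (subtree d 1)) (snd D) (in_map _ _ _ HD)). lia.
  - pose proof (bnd_K 2 (Nq d) D HD). lia.
Qed.

Lemma phid_qf d : qfree (phid d).
Proof. unfold phid. split. simpl; auto. apply qf_matrix. Qed.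
Lemma phid_vb d : vars_below (2 + Nq d) (phid d).
Proof.
  unfold phid. change (2 + Nq d)%nat with (3 + Wd d + Wd d)%nat. split.
  unfold EQ. split; split; first [apply tvb_num | simpl; lia].
  apply vb_matrix. unfold Wd, WW. lia.
Qed.

Lemma comp1_inv f g v y : reval (RComp f [g]) v y -> exists w, reval g v w /\ reval f [w] y.
Proof.
  intros H. inversion H; subst. match goal with Hs : revals _ _ _ |- _ => inversion Hs; subst end.
  match goal with Hs : revals [] _ _ |- _ => inversion Hs; subst end. eauto.
Qed.

Lemma sat_equiv d : satisfiable (EA_sentence 2 (Nq d) (phid d)) <-> reval (Qd d) [bd d] 0%nat.
Proof.
  assert (HLW : (Ld d + 3 <= Wd d)%nat) by (unfold Wd, WW; lia).
  assert (Hcl : closedN (nodes d)) by apply closed_subtree.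
  pose proof (arOK_nodes d) as Har.
  split.
  - intros (nv & h & Hf & Hs). unfold EA_sentence in Hs.
    apply sat_exists_block in Hs. destruct Hs as (e & He & Hs).
    rewrite sat_forall_block in Hs.
    assert (He0 : e 0%nat = Z.of_nat (bd d)).
    { specialize (Hs e (fun _ _ => eq_refl)). destruct Hs as [Heq _].
      rewrite sat_EQ in Heq. rewrite teval_num in Heq. exact Heq. }
    assert (HB : forall e', (forall i, (i < 2 \/ 3 + Wd d + Wd d <= i)%nat -> e' i = e i) ->
                 sat nv e' h (Bd d)).
    { intros e' He'. apply (Hs e' He'). }
    unfold Bd in HB. rewrite matrix_sem in HB by auto. destruct HB as [(R1 & R2 & R3 & R4) HR].
    assert (HR' : forall D, In D (nodes d) -> forall x, In x (selfrules (Ld d) (nodes d) D) ->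
                  forall a, RuleSemAt (WW (Ld d)) nv h x a).
    { intros D HD x Hx a. apply HR. unfold Rsd. apply in_flat_map. eauto. }
    pose proof (sound (Ld d) (nodes d) nv h Hcl Har HR' (Qd d) 1 (subtree_head _ _) (e 1%nat) R1 R2) as Hev.
    assert (Ei : insv h (e 1%nat) 1 = [bd d]).
    { unfold insv. cbn [seq map]. rewrite R3, He0, Nat2Z.id. reflexivity. }
    assert (Eo : outv h (Ld d) (e 1%nat) = 0%nat) by (unfold outv; rewrite R4; reflexivity).
    rewrite Ei, Eo in Hev. exact Hev.
  - intros Hr.
    destruct (complete (Ld d) (nodes d) Hcl Har (Qd d) [bd d] 0%nat Hr (subtree_head _ _)) as [H Rp].
    destruct Rp as (HV & HW & Ht & Hi & Ho).
    exists (-1), (hL H). split; [apply finite_hL|].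
    unfold EA_sentence. apply sat_exists_block.
    set (e := fun i => if Nat.eqb i 0 then Z.of_nat (bd d) else 0).
    exists e. split.
    { intros i Hi'. unfold e. destruct (Nat.eqb_spec i 0); [lia|reflexivity]. }
    rewrite sat_forall_block. intros e' He'. split.
    + rewrite sat_EQ. rewrite teval_num. change (e' 0%nat = Z.of_nat (bd d)). rewrite He' by lia. reflexivity.
    + revert e' He'. unfold Bd. apply matrix_sem; auto. apply finite_hL.
      split.
      * assert (E1 : e 1%nat = Z.of_nat 0) by reflexivity. assert (E0 : e 0%nat = Z.of_nat (bd d)) by reflexivity.
        rewrite E1, E0. split; [|split; [|split]].
        -- apply ALLc_hL. unfold Wd, WW; lia. unfold Wd, WW in *; lia.
        -- rewrite hL_some by (unfold Wd, WW in *; lia). rewrite Ht. reflexivity.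
        -- rewrite rdv_hL. change (0 + INo 0)%nat with (INo 0). rewrite (Hi 0%nat) by (simpl; lia). reflexivity.
        -- rewrite rdv_hL. change (0 + OUTo (Ld d))%nat with (OUTo (Ld d)). rewrite Ho. reflexivity.
      * intros x Hx a. unfold Rsd in Hx. apply in_flat_map in Hx. destruct Hx as (D & HD & Hx).
        apply (valid_global (Ld d) (nodes d) H HV D HD x Hx a).
Qed.

Theorem theorem4 : ~ exists d : recf, decides_EA_sat d.
Proof.
  intros (d & Hd). destruct (Hd 2%nat (Nq d) (phid d) (phid_qf d) (phid_vb d)) as [H1 H0].
  set (c := code_EA 2 (Nq d) (phid d)).
  assert (HK : reval (Kp 2 (Nq d)) [bd d] c) by (unfold c, phid, bd; apply Kp_ev).
  assert (QE : forall y, reval (Qd d) [bd d] y <-> reval d [c] y).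
  { intros y. split.
    - intros Hq. unfold Qd in Hq. apply comp1_inv in Hq. destruct Hq as (w & Hw & Hd').
      rewrite (reval_det _ _ _ Hw _ HK) in Hd'. exact Hd'.
    - intros Hdc. unfold Qd. apply ev_comp1 with (w := c); auto. }
  destruct (classic (satisfiable (EA_sentence 2 (Nq d) (phid d)))) as [Hs|Hs].
  - pose proof (H1 Hs) as E1. apply sat_equiv in Hs. apply QE in Hs.
    pose proof (reval_det _ _ _ E1 _ Hs). discriminate.
  - pose proof (H0 Hs) as E0. apply Hs. apply sat_equiv. apply QE. exact E0.
Qed.
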